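(* For every $\lambda>0$ the spectral problem has a unique solution $(c(\lambda),Q_\lambda)$. The function $\lambda\mapsto c(\lambda)$ attains its minimum $c^*>0$ on $(0,\infty)$ at some $\lambda^*>0$; let $Q^*=Q_{\lambda^*}$. Moreover: (i) for every $\lambda>0$, $Q_\lambda$ is increasing on $\Theta$, and there is $\theta_0\in\overline\Theta$ with $-\lambda c(\lambda)+\lambda^2\theta_0+r=0$ such that $Q_\lambda$ is convex on $[\theta_{\min},\theta_0]$ and concave on $[\theta_0,\theta_{\max}]$; (ii) with $\langle\theta_\lambda\rangle=\int_\Theta\theta Q_\lambda(\theta)\,d\theta$, for all $\lambda>0$: $-\lambda c(\lambda)+\lambda^2\langle\theta_\lambda\rangle+r=0$ and $\langle\theta_\lambda\rangle>\frac{\theta_{\max}+\theta_{\min}}2$; (iii) with $\langle\theta^*\rangle=\langle\theta_{\lambda^*}\rangle$: $c^*>2\sqrt{r\langle\theta^*\rangle}$ and $c^*\ge\lambda^*(\theta_{\max}+\theta_{\min})$.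
   Context: $\Theta=(\theta_{\min},\theta_{\max})$ with $0<\theta_{\min}<\theta_{\max}<\infty$; $\alpha>0$, $r>0$. Spectral problem for $\lambda>0$: find $c(\lambda)\in\mathbb R$ and $Q_\lambda\in C^2(\overline\Theta)$ with $\alpha Q_\lambda''+(-\lambda c(\lambda)+\theta\lambda^2+r)Q_\lambda=0$ on $\Theta$, $Q_\lambda'(\theta_{\min})=Q_\lambda'(\theta_{\max})=0$, $Q_\lambda>0$, $\int_\Theta Q_\lambda\,d\theta=1$. *)

(* Defs.v *)
From Stdlib Require Import Reals Lra.
Open Scope R_scope.

Definition cont_on_closed (f : R -> R) (a b : R) : Prop :=
  forall x, a <= x <= b -> limit1_in f (fun y => a <= y <= b) (f x) x.

(* f is C^2 on [a,b] with first and second derivatives f1, f2: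
   f' = f1 and f1' = f2 on the open interval, and f, f1, f2 extend
   continuously to the closed interval (so f1 a, f1 b are the one-sided
   derivatives at the endpoints). *)
Definition C2_closed_with (f f1 f2 : R -> R) (a b : R) : Prop :=
  cont_on_closed f a b /\ cont_on_closed f1 a b /\ cont_on_closed f2 a b /\
  (forall x, a < x < b -> derivable_pt_lim f x (f1 x)) /\
  (forall x, a < x < b -> derivable_pt_lim f1 x (f2 x)).

Definition spectral_solution (alpha r tmin tmax lam c : R) (Q : R -> R) : Prop :=
  exists Q1 Q2 : R -> R,
    C2_closed_with Q Q1 Q2 tmin tmax /\
    (forall th, tmin < th < tmax ->
        alpha * Q2 th + (- lam * c + th * lam ^ 2 + r) * Q th = 0) /\
    Q1 tmin = 0 /\ Q1 tmax = 0 /\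
    (forall th, tmin <= th <= tmax -> 0 < Q th) /\
    (exists pr : Riemann_integrable Q tmin tmax, RiemannInt pr = 1).

Definition convex_on (f : R -> R) (a b : R) : Prop :=
  forall x y t, a <= x <= b -> a <= y <= b -> 0 <= t <= 1 ->
    f (t * x + (1 - t) * y) <= t * f x + (1 - t) * f y.

Definition concave_on (f : R -> R) (a b : R) : Prop :=
  forall x y t, a <= x <= b -> a <= y <= b -> 0 <= t <= 1 ->
    t * f x + (1 - t) * f y <= f (t * x + (1 - t) * y).

Definition mean_is (Q : R -> R) (tmin tmax m : R) : Prop :=
  exists pr : Riemann_integrable (fun th => th * Q th) tmin tmax, RiemannInt pr = m.

(* Main.v *)
Require Import Defs.
From Stdlib Require Import Reals.
From Stdlib Require Import Lra Psatz Arith Lia Classical IndefiniteDescription.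
From Coquelicot Require Import Coquelicot.
Open Scope R_scope.

Open Scope R_scope.

Lemma is_derive_derivable f x l : is_derive f x l -> derivable_pt f x.
Proof. intro H. exists l. now apply is_derive_Reals. Qed.

Lemma MVT_open (f df : R -> R) a b : a < b ->
  (forall x, a <= x <= b -> continuity_pt f x) ->
  (forall x, a < x < b -> is_derive f x (df x)) ->
  exists c, a < c < b /\ f b - f a = df c * (b - a).
Proof.
  intros Hab Hc Hd.
  assert (pr1 : forall c, a < c < b -> derivable_pt f c).
  { intros c Hc'. exact (is_derive_derivable _ _ _ (Hd c Hc')). }
  assert (pr2 : forall c, a < c < b -> derivable_pt id c).
  { intros c _. apply derivable_pt_id. }
  destruct (MVT f id a b pr1 pr2 Hab Hc) as [c [P HP]].
  { intros; apply derivable_continuous_pt, derivable_pt_id. }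
  exists c; split; [exact P|].
  rewrite (derive_pt_eq_0 f c (df c) (pr1 c P)) in HP.
  2:{ apply is_derive_Reals, Hd, P. }
  rewrite (derive_pt_eq_0 id c 1 (pr2 c P)) in HP.
  2:{ apply derivable_pt_lim_id. }
  unfold id in HP. lra.
Qed.

Lemma decr_gen (f df : R -> R) a b : a <= b ->
  (forall x, a <= x <= b -> continuity_pt f x) ->
  (forall x, a < x < b -> is_derive f x (df x)) ->
  (forall x, a < x < b -> df x <= 0) -> f b <= f a.
Proof.
  intros Hab Hc Hd Hn. destruct (Req_dec a b) as [->|Hne]; [lra|].
  destruct (MVT_open f df a b) as [c [Hc1 Hc2]]; auto; try lra.
  specialize (Hn c Hc1). nra.
Qed.

Lemma decr_strict (f df : R -> R) a b : a < b ->
  (forall x, a <= x <= b -> continuity_pt f x) ->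
  (forall x, a < x < b -> is_derive f x (df x)) ->
  (forall x, a < x < b -> df x < 0) -> f b < f a.
Proof.
  intros Hab Hc Hd Hn.
  destruct (MVT_open f df a b) as [c [Hc1 Hc2]]; auto.
  specialize (Hn c Hc1). nra.
Qed.

Lemma incr_gen (f df : R -> R) a b : a <= b ->
  (forall x, a <= x <= b -> continuity_pt f x) ->
  (forall x, a < x < b -> is_derive f x (df x)) ->
  (forall x, a < x < b -> 0 <= df x) -> f a <= f b.
Proof.
  intros Hab Hc Hd Hn.
  assert (H := decr_gen (fun x => - f x) (fun x => - df x) a b Hab).
  cut (- f b <= - f a); [lra|]. apply H.
  - intros; apply continuity_pt_opp; auto.
  - intros. apply (is_derive_opp f x (df x)); auto.
  - intros x Hx; specialize (Hn x Hx); lra.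
Qed.

Lemma incr_strict (f df : R -> R) a b : a < b ->
  (forall x, a <= x <= b -> continuity_pt f x) ->
  (forall x, a < x < b -> is_derive f x (df x)) ->
  (forall x, a < x < b -> 0 < df x) -> f a < f b.
Proof.
  intros Hab Hc Hd Hn.
  assert (H := decr_strict (fun x => - f x) (fun x => - df x) a b Hab).
  cut (- f b < - f a); [lra|]. apply H.
  - intros; apply continuity_pt_opp; auto.
  - intros. apply (is_derive_opp f x (df x)); auto.
  - intros x Hx; specialize (Hn x Hx); lra.
Qed.


Lemma is_derive_eq (f : R -> R) x l l' : is_derive f x l -> l = l' -> is_derive f x l'.
Proof. intros H ->; exact H. Qed.

Ltac solve_ex_derive := match goal with H : is_derive ?f ?x _ |- ex_derive ?g ?x => eexists; exact H end.
Ltac rw_derive := repeat match goal with H : is_derive ?f ?x _ |- context [Derive ?g ?x] => rewrite (is_derive_unique g x _ H) end.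
Ltac ader := auto_derive; repeat split; try solve_ex_derive; auto; rw_derive.

Lemma derive_cont (f : R -> R) x l : is_derive f x l -> continuity_pt f x.
Proof. intro H. apply derivable_continuous_pt. eapply is_derive_derivable; exact H. Qed.

Lemma gronwall_fwd (E dE : R -> R) (K D a b : R) : 0 < K -> 0 <= D ->
  (forall x, a <= x <= b -> continuity_pt E x) ->
  (forall x, a < x < b -> is_derive E x (dE x)) ->
  (forall x, a < x < b -> dE x <= K * E x + D) ->
  forall x, a <= x <= b -> E x <= (E a + D / K) * exp (K * (x - a)).
Proof.
  intros HK HD Hc Hd Hb x Hx.
  set (g := fun t => (E t + D / K) * exp (- (K * (t - a)))).
  assert (Hg : g x <= g a).
  { apply (decr_gen g (fun t => (dE t - K * E t - D) * exp (- (K * (t - a)))) a x).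
    - lra.
    - intros t Ht. unfold g. apply continuity_pt_mult.
      + apply continuity_pt_plus; [apply Hc; lra| apply continuity_pt_const; intros ??; reflexivity].
      + apply (derive_cont _ _ (- K * exp (- (K * (t - a))))). ader. unfold Rminus; ring.
    - intros t Ht. unfold g. specialize (Hd t ltac:(lra)). ader. unfold Rminus; field. lra.
    - intros t Ht. specialize (Hb t ltac:(lra)).
      assert (0 < exp (- (K * (t - a)))) by apply exp_pos.
      rewrite <- (Rmult_0_l (exp (- (K * (t - a))))). apply Rmult_le_compat_r; lra. }
  unfold g in Hg. replace (a - a) with 0 in Hg by ring.
  rewrite Rmult_0_r, Ropp_0, exp_0, Rmult_1_r in Hg.
  assert (Hp : exp (- (K * (x - a))) * exp (K * (x - a)) = 1).
  { rewrite <- exp_plus. replace (_ + _) with 0 by ring. apply exp_0. }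
  assert (0 < exp (K * (x - a))) by apply exp_pos.
  assert (0 <= D / K) by (apply Rdiv_le_0_compat; lra).
  assert (E x + D / K <= (E a + D / K) * exp (K * (x - a))).
  { apply Rmult_le_compat_r with (r := exp (K * (x - a))) in Hg; [|lra].
    rewrite Rmult_assoc, Hp, Rmult_1_r in Hg. exact Hg. }
  lra.
Qed.

Lemma gronwall_bwd (E dE : R -> R) (K a b : R) :
  (forall x, a <= x <= b -> continuity_pt E x) ->
  (forall x, a < x < b -> is_derive E x (dE x)) ->
  (forall x, a < x < b -> - K * E x <= dE x) ->
  forall x, a <= x <= b -> E x * exp (K * x) <= E b * exp (K * b).
Proof.
  intros Hc Hd Hb x Hx.
  apply (incr_gen (fun t => E t * exp (K * t)) (fun t => (dE t + K * E t) * exp (K * t)) x b).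
  - lra.
  - intros t Ht. apply continuity_pt_mult; [apply Hc; lra|].
    apply (derive_cont _ _ (K * exp (K * t))). ader. ring.
  - intros t Ht. specialize (Hd t ltac:(lra)). ader. ring.
  - intros t Ht. specialize (Hb t ltac:(lra)).
    assert (0 < exp (K * t)) by apply exp_pos.
    apply Rmult_le_pos; lra.
Qed.

Open Scope R_scope.

Fixpoint trip (A B : R) (n : nat) : R * R * R :=
  match n with
  | O => (1, 0, A / 2)
  | S m => let '(x, y, z) := trip A B m in
           (y, z, (A * y - B * x) / ((INR m + 3) * (INR m + 2)))
  end.

Definition coef A B n := fst (fst (trip A B n)).

Lemma trip_eq A B n : trip A B n = (coef A B n, coef A B (S n), coef A B (S (S n))).
Proof.
  induction n as [|n IH].
  - reflexivity.
  - unfold coef at 2 3. simpl trip at 2 3. rewrite IH. simpl.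
    unfold coef at 1. simpl. rewrite IH. reflexivity.
Qed.

Lemma coef0 A B : coef A B 0 = 1. Proof. reflexivity. Qed.
Lemma coef1 A B : coef A B 1 = 0. Proof. reflexivity. Qed.
Lemma coef2 A B : coef A B 2 = A / 2. Proof. reflexivity. Qed.
Lemma coefS3 A B n : coef A B (S (S (S n))) =
  (A * coef A B (S n) - B * coef A B n) / ((INR n + 3) * (INR n + 2)).
Proof.
  unfold coef at 1. simpl trip. rewrite trip_eq. reflexivity.
Qed.

Fixpoint cmax (c : nat -> R) (n : nat) : R :=
  match n with O => c O | S k => Rmax (cmax c k) (c (S k)) end.

Lemma cmax_ge c n : c n <= cmax c n.
Proof. destruct n; simpl; [lra| apply Rmax_r]. Qed.
Lemma cmax_mono c n k : cmax c n <= cmax c (n + k).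
Proof.
  induction k. rewrite Nat.add_0_r; lra.
  rewrite Nat.add_succ_r. simpl. eapply Rle_trans; [exact IHk| apply Rmax_l].
Qed.

Lemma coef_bounded A B R : 0 < R -> exists M, forall n, Rabs (coef A B n) * R ^ n <= M.
Proof.
  intros HR.
  set (q := fun n => Rabs (coef A B n) * R ^ n).
  set (c := fun n => Rmax (q n) (Rmax (q (S n)) (q (S (S n))))).
  assert (Hq0 : forall n, 0 <= q n).
  { intro n; unfold q. apply Rmult_le_pos; [apply Rabs_pos| apply pow_le; lra]. }
  destruct (INR_archimed 1 (Rabs A * R ^ 2 + Rabs B * R ^ 3)) as [N HN]; [lra|].
  rewrite Rmult_1_r in HN.
  assert (Hstep : forall n, (N <= n)%nat -> c (S n) <= c n).
  { intros n Hn. unfold c.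
    assert (Hrec : q (S (S (S n))) <= Rmax (q n) (Rmax (q (S n)) (q (S (S n))))).
    { unfold q at 1. rewrite coefS3.
      assert (HNn : INR N <= INR n) by (apply le_INR; exact Hn).
      assert (Hpos : 0 <= INR n) by apply pos_INR.
      set (d := (INR n + 3) * (INR n + 2)).
      assert (Hd : Rabs A * R ^ 2 + Rabs B * R ^ 3 <= d) by (unfold d; nra).
      assert (Hdp : 0 < d) by (unfold d; nra).
      set (m := Rmax (q n) (Rmax (q (S n)) (q (S (S n))))).
      assert (H1 : q n <= m) by (unfold m; apply Rmax_l).
      assert (H2 : q (S n) <= m) by (unfold m; eapply Rle_trans; [apply Rmax_l| apply Rmax_r]).
      assert (Hm : 0 <= m) by (eapply Rle_trans; [apply Hq0| exact H1]).
      rewrite Rabs_div, (Rabs_right d) by lra.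
      assert (Habs : Rabs (A * coef A B (S n) - B * coef A B n) * R ^ (S (S (S n)))
                     <= Rabs A * R ^ 2 * q (S n) + Rabs B * R ^ 3 * q n).
      { unfold q. eapply Rle_trans.
        - apply Rmult_le_compat_r; [apply pow_le; lra|]. unfold Rminus.
          eapply Rle_trans; [apply Rabs_triang|]. rewrite Rabs_Ropp, !Rabs_mult. apply Rle_refl.
        - simpl. right. ring. }
      unfold Rdiv. rewrite Rmult_assoc, (Rmult_comm (/ d)), <- Rmult_assoc.
      apply (Rmult_le_reg_r d); [lra|]. rewrite Rmult_assoc, Rinv_l, Rmult_1_r by lra.
      eapply Rle_trans; [exact Habs|].
      assert (0 <= Rabs A * R ^ 2) by (apply Rmult_le_pos; [apply Rabs_pos| apply pow_le; lra]).
      assert (0 <= Rabs B * R ^ 3) by (apply Rmult_le_pos; [apply Rabs_pos| apply pow_le; lra]).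
      nra. }
    apply Rmax_lub.
    - eapply Rle_trans; [apply Rmax_l| apply Rmax_r].
    - apply Rmax_lub; [eapply Rle_trans; [apply Rmax_r| apply Rmax_r]| exact Hrec]. }
  exists (cmax c N). intro n.
  assert (Hcn : c n <= cmax c N).
  { destruct (le_lt_dec n N) as [Hle|Hlt].
    - replace N with (n + (N - n))%nat by lia.
      eapply Rle_trans; [apply cmax_ge| apply cmax_mono].
    - replace n with (N + (n - N))%nat by lia.
      induction (n - N)%nat as [|k IH].
      + rewrite Nat.add_0_r; apply cmax_ge.
      + rewrite Nat.add_succ_r. eapply Rle_trans; [apply Hstep; lia| exact IH]. }
  eapply Rle_trans; [| exact Hcn]. unfold c. apply Rmax_l.
Qed.

Lemma coef_radius A B x : Rbar_lt (Rabs x) (CV_radius (coef A B)).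
Proof.
  destruct (CV_radius_bounded (coef A B)) as [Hub _].
  destruct (coef_bounded A B (Rabs x + 1)) as [M HM].
  { assert (0 <= Rabs x) by apply Rabs_pos. lra. }
  assert (H : Rbar_le (Rabs x + 1) (CV_radius (coef A B))).
  { apply Hub. exists M. intro n. rewrite Rabs_mult.
    assert (0 <= Rabs x) by apply Rabs_pos.
    rewrite (Rabs_right ((Rabs x + 1) ^ n)); [apply HM|].
    apply Rle_ge, pow_le. lra. }
  destruct (CV_radius (coef A B)) as [r| |]; simpl in *; auto; lra.
Qed.

Lemma coef_ode A B x :
  PSeries (PS_derive (PS_derive (coef A B))) x = (A - B * x) * PSeries (coef A B) x.
Proof.
  assert (Hex : ex_pseries (coef A B) x) by apply CV_radius_inside, coef_radius.
  transitivity (PSeries (PS_minus (PS_scal A (coef A B)) (PS_scal B (PS_incr_1 (coef A B)))) x).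
  - apply PSeries_ext. intro n. unfold PS_derive, PS_minus, PS_scal, PS_incr_1.
    unfold scal, plus, opp; simpl; unfold mult; simpl.
    destruct n as [|n].
    + rewrite coef2, coef0. simpl. unfold zero; simpl. field.
    + rewrite coefS3. rewrite !S_INR. field. assert (0 <= INR n) by apply pos_INR. split; lra.
  - rewrite PSeries_minus.
    + rewrite !PSeries_scal, PSeries_incr_1. ring.
    + apply ex_pseries_scal; [apply Rmult_comm| exact Hex].
    + apply ex_pseries_scal; [apply Rmult_comm| apply ex_pseries_incr_1; exact Hex].
Qed.

(* solution of y'' = (A - B x) y, y 0 = 1, y' 0 = 0, as functions of x *)
Definition ys A B x := PSeries (coef A B) x.
Definition ys1 A B x := PSeries (PS_derive (coef A B)) x.

Lemma ys_der A B x : is_derive (ys A B) x (ys1 A B x).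
Proof. apply is_derive_PSeries, coef_radius. Qed.

Lemma ys1_der A B x : is_derive (ys1 A B) x ((A - B * x) * ys A B x).
Proof.
  unfold ys1, ys. rewrite <- coef_ode. apply is_derive_PSeries.
  rewrite CV_radius_derive. apply coef_radius.
Qed.

Lemma ys_0 A B : ys A B 0 = 1.
Proof. unfold ys. rewrite PSeries_decr_1. rewrite Rmult_0_l, Rplus_0_r. apply coef0.
  apply CV_radius_inside, coef_radius. Qed.

Lemma ys1_0 A B : ys1 A B 0 = 0.
Proof. unfold ys1. rewrite PSeries_decr_1. rewrite Rmult_0_l, Rplus_0_r. unfold PS_derive.
  rewrite coef1. ring.
  apply CV_radius_inside. rewrite CV_radius_derive. apply coef_radius. Qed.

Open Scope R_scope.

Ltac nra' := repeat (match goal with x := _ |- _ => clearbody x end); nra.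

Ltac reqR := match goal with |- @eq _ ?a ?b => change (@eq R a b) end.

Section ODE.
Variables tmin tmax alpha : R.
Hypothesis Halpha : 0 < alpha.
Hypothesis Htmin : 0 < tmin.
Hypothesis Htmm : tmin < tmax.

Definition pA mu lam := (mu - lam ^ 2 * tmin) / alpha.
Definition pB lam := lam ^ 2 / alpha.
Definition pp mu lam th := (mu - lam ^ 2 * th) / alpha.
Definition Y mu lam th := ys (pA mu lam) (pB lam) (th - tmin).
Definition Y1 mu lam th := ys1 (pA mu lam) (pB lam) (th - tmin).

Lemma shift_der (f : R -> R) df th :
  is_derive f (th - tmin) df -> is_derive (fun t => f (t - tmin)) th df.
Proof.
  intro H. apply (is_derive_eq _ _ (scal 1 df)).
  - apply (is_derive_comp f (fun t => t - tmin)); [exact H|].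
    auto_derive; auto.
  - unfold scal; simpl; unfold mult; simpl. ring.
Qed.

Lemma Y_der mu lam th : is_derive (Y mu lam) th (Y1 mu lam th).
Proof. unfold Y, Y1. apply (shift_der (ys _ _)). apply ys_der. Qed.

Lemma Y1_der mu lam th : is_derive (Y1 mu lam) th (pp mu lam th * Y mu lam th).
Proof.
  unfold Y1. apply (is_derive_eq _ _ ((pA mu lam - pB lam * (th - tmin)) * ys (pA mu lam) (pB lam) (th - tmin))).
  - apply (shift_der (ys1 _ _)). apply ys1_der.
  - unfold Y, pA, pB, pp. apply Rmult_eq_compat_r. field. lra.
Qed.

Lemma Y_tmin mu lam : Y mu lam tmin = 1.
Proof. unfold Y. replace (tmin - tmin) with 0 by ring. apply ys_0. Qed.
Lemma Y1_tmin mu lam : Y1 mu lam tmin = 0.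
Proof. unfold Y1. replace (tmin - tmin) with 0 by ring. apply ys1_0. Qed.

Lemma Y_cont mu lam th : continuity_pt (Y mu lam) th.
Proof. eapply derive_cont, Y_der. Qed.
Lemma Y1_cont mu lam th : continuity_pt (Y1 mu lam) th.
Proof. eapply derive_cont, Y1_der. Qed.

Lemma ab_ineq a b q : 2 * b * (q * a) <= Rabs q * (a * a + b * b).
Proof.
  destruct (Rle_dec 0 q).
  - rewrite Rabs_right by lra.
    assert (0 <= q * ((a - b) * (a - b))) by (apply Rmult_le_pos; [lra| apply Rle_0_sqr]). nra'.
  - rewrite Rabs_left by lra.
    assert (0 <= - q * ((a + b) * (a + b))) by (apply Rmult_le_pos; [lra| apply Rle_0_sqr]). nra'.
Qed.

Lemma energy_gen (f f1 g : R -> R) (K D : R) : 0 < K -> 0 <= D ->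
  (forall th, is_derive f th (f1 th)) -> (forall th, is_derive f1 th (g th)) ->
  (forall th, tmin < th < tmax ->
     2 * f th * f1 th + 2 * f1 th * g th <= K * (f th * f th + f1 th * f1 th) + D) ->
  forall th, tmin <= th <= tmax ->
    f th * f th + f1 th * f1 th <=
      (f tmin * f tmin + f1 tmin * f1 tmin + D / K) * exp (K * (th - tmin)).
Proof.
  intros HK HD Hf Hf1 Hb.
  apply (gronwall_fwd (fun t => f t * f t + f1 t * f1 t)
           (fun t => 2 * f t * f1 t + 2 * f1 t * g t) K D tmin tmax HK HD).
  - intros x _. apply (derive_cont _ _ (2 * f x * f1 x + 2 * f1 x * g x)).
    specialize (Hf x); specialize (Hf1 x). ader. ring.
  - intros x _. specialize (Hf x); specialize (Hf1 x). ader. ring.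
  - exact Hb.
Qed.

Lemma pp_bound mu lam th : tmin <= th <= tmax ->
  Rabs (pp mu lam th) <= (Rabs mu + lam ^ 2 * tmax) / alpha.
Proof.
  intros Hth. unfold pp, Rdiv. rewrite Rabs_mult, (Rabs_right (/ alpha)).
  2:{ apply Rle_ge, Rlt_le, Rinv_0_lt_compat; lra. }
  apply Rmult_le_compat_r; [apply Rlt_le, Rinv_0_lt_compat; lra|].
  unfold Rminus. eapply Rle_trans; [apply Rabs_triang|]. rewrite Rabs_Ropp.
  apply Rplus_le_compat_l. rewrite Rabs_right.
  - apply Rmult_le_compat_l; [apply pow2_ge_0|lra].
  - apply Rle_ge, Rmult_le_pos; [apply pow2_ge_0|lra].
Qed.

Definition KK mu lam := 2 + (Rabs mu + lam ^ 2 * tmax) / alpha.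

Lemma KK_pos mu lam : 0 < KK mu lam.
Proof.
  unfold KK. assert (0 <= (Rabs mu + lam ^ 2 * tmax) / alpha).
  { apply Rdiv_le_0_compat; [|lra]. assert (0 <= Rabs mu) by apply Rabs_pos.
    assert (0 <= lam ^ 2) by apply pow2_ge_0. nra'. }
  lra.
Qed.

Lemma Y_energy mu lam th : tmin <= th <= tmax ->
  Y mu lam th * Y mu lam th + Y1 mu lam th * Y1 mu lam th
    <= exp (KK mu lam * (tmax - tmin)).
Proof.
  intros Hth.
  eapply Rle_trans.
  - apply (energy_gen (Y mu lam) (Y1 mu lam) (fun t => pp mu lam t * Y mu lam t) (KK mu lam) 0);
      auto using KK_pos, Y_der, Y1_der; try lra.
    intros t Ht. pose proof (pp_bound mu lam t ltac:(lra)) as Hp.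
    unfold KK. set (P := (Rabs mu + lam ^ 2 * tmax) / alpha) in *.
    set (a := Y mu lam t); set (b := Y1 mu lam t); set (q := pp mu lam t) in *.
    assert (H1 : 2 * b * (q * a) <= Rabs q * (a * a + b * b)) by apply ab_ineq.
    assert (H0 : 0 <= a * a + b * b) by nra'.
    assert (H2 : Rabs q * (a * a + b * b) <= P * (a * a + b * b)) by (apply Rmult_le_compat_r; lra).
    assert (H3 : 0 <= (a - b) * (a - b)) by apply Rle_0_sqr.
    lra.
  - rewrite Y_tmin, Y1_tmin.
    replace (1 * 1 + 0 * 0 + 0 / KK mu lam) with 1 by (field; apply Rgt_not_eq, KK_pos). rewrite Rmult_1_l.
    destruct (Req_dec th tmax) as [->|]; [lra|].
    left. apply exp_increasing. pose proof (KK_pos mu lam). nra'.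
Qed.

Lemma sq_lt_abs (z e : R) : 0 < e -> z * z < e * e -> Rabs z < e.
Proof. intros He Hz. apply Rabs_def1; nra'. Qed.

Lemma Y_cont_param mu lam e : 0 < e -> exists eta, 0 < eta /\
  forall mu' lam', Rabs (mu' - mu) < eta -> Rabs (lam' - lam) < eta ->
    forall th, tmin <= th <= tmax ->
      Rabs (Y mu' lam' th - Y mu lam th) < e /\ Rabs (Y1 mu' lam' th - Y1 mu lam th) < e.
Proof.
  intros He.
  set (Pb := (Rabs mu + 1 + (Rabs lam + 1) ^ 2 * tmax) / alpha).
  set (K := 2 + Pb).
  assert (HPb : 0 <= Pb).
  { unfold Pb. apply Rdiv_le_0_compat; [|lra]. assert (0 <= Rabs mu) by apply Rabs_pos.
    assert (0 <= (Rabs lam + 1) ^ 2) by apply pow2_ge_0. nra'. }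
  assert (HK : 0 < K) by (unfold K; lra).
  set (Yb := exp (KK mu lam * (tmax - tmin))).
  assert (HYb : 0 < Yb) by apply exp_pos.
  set (C0 := (1 + (2 * Rabs lam + 1) * tmax) / alpha).
  assert (HC0 : 0 < C0).
  { unfold C0. apply Rdiv_lt_0_compat; [|lra]. assert (0 <= Rabs lam) by apply Rabs_pos. nra'. }
  set (G := C0 * C0 * Yb * exp (K * (tmax - tmin)) / K).
  assert (HG : 0 < G).
  { unfold G. apply Rdiv_lt_0_compat; [|lra]. pose proof (exp_pos (K * (tmax - tmin))).
    apply Rmult_lt_0_compat; [|lra]. apply Rmult_lt_0_compat; [nra'|lra]. }
  set (eta := Rmin 1 (e / (1 + G))).
  assert (Heta1 : eta <= 1) by apply Rmin_l.
  assert (Heta2 : eta <= e / (1 + G)) by apply Rmin_r.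
  assert (Hetap : 0 < eta).
  { apply Rmin_glb_lt; [lra|]. apply Rdiv_lt_0_compat; lra. }
  assert (Heta3 : eta * eta * G < e * e).
  { assert (eta * (1 + G) <= e).
    { apply (Rmult_le_compat_r (1 + G)) in Heta2; [|lra].
      unfold Rdiv in Heta2. rewrite Rmult_assoc, Rinv_l, Rmult_1_r in Heta2 by lra. exact Heta2. }
    assert (eta * G <= e - eta) by lra.
    assert (eta * (eta * G) <= eta * (e - eta)) by (apply Rmult_le_compat_l; lra).
    assert (0 <= eta * G) by (apply Rmult_le_pos; lra).
    assert (eta * e <= e * e) by (apply Rmult_le_compat_r; lra).
    assert (0 < eta * eta) by (apply Rmult_lt_0_compat; lra). lra. }
  exists eta. split; [exact Hetap|].
  intros mu' lam' Hmu Hlam th Hth.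
  set (z := fun t => Y mu' lam' t - Y mu lam t).
  set (z1 := fun t => Y1 mu' lam' t - Y1 mu lam t).
  assert (Hdelta : forall t, tmin <= t <= tmax -> Rabs (pp mu' lam' t - pp mu lam t) <= eta * C0).
  { intros t Ht. unfold pp.
    replace ((mu' - lam' ^ 2 * t) / alpha - (mu - lam ^ 2 * t) / alpha)
      with (((mu' - mu) - (lam' - lam) * (lam' + lam) * t) / alpha) by (field; lra).
    unfold Rdiv. rewrite Rabs_mult, (Rabs_right (/ alpha)) by (apply Rle_ge, Rlt_le, Rinv_0_lt_compat; lra).
    unfold C0. unfold Rdiv. rewrite <- Rmult_assoc.
    apply Rmult_le_compat_r; [apply Rlt_le, Rinv_0_lt_compat; lra|].
    unfold Rminus at 1. eapply Rle_trans; [apply Rabs_triang|]. rewrite Rabs_Ropp, !Rabs_mult.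
    rewrite (Rabs_right t) by lra.
    assert (Hl : Rabs (lam' + lam) <= 2 * Rabs lam + 1).
    { replace (lam' + lam) with ((lam' - lam) + 2 * lam) by ring.
      eapply Rle_trans; [apply Rabs_triang|]. rewrite Rabs_mult, (Rabs_right 2) by lra. lra. }
    assert (0 <= Rabs (lam' - lam)) by apply Rabs_pos.
    assert (0 <= Rabs (lam' + lam)) by apply Rabs_pos.
    assert (Rabs (lam' - lam) * Rabs (lam' + lam) <= eta * (2 * Rabs lam + 1)).
    { apply Rmult_le_compat; lra. }
    assert (Rabs (lam' - lam) * Rabs (lam' + lam) * t <= eta * (2 * Rabs lam + 1) * tmax).
    { apply Rmult_le_compat; try lra. apply Rmult_le_pos; lra. }
    lra. }
  assert (Hp' : forall t, tmin <= t <= tmax -> Rabs (pp mu' lam' t) <= Pb).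
  { intros t Ht. eapply Rle_trans; [apply pp_bound; exact Ht|].
    unfold Pb. unfold Rdiv. apply Rmult_le_compat_r; [apply Rlt_le, Rinv_0_lt_compat; lra|].
    assert (Rabs mu' <= Rabs mu + 1).
    { replace mu' with ((mu' - mu) + mu) by ring. eapply Rle_trans; [apply Rabs_triang|]. lra. }
    assert (lam' ^ 2 <= (Rabs lam + 1) ^ 2).
    { rewrite <- (pow2_abs lam'). apply pow_incr. split; [apply Rabs_pos|].
      replace lam' with ((lam' - lam) + lam) by ring. eapply Rle_trans; [apply Rabs_triang|]. lra. }
    nra'. }
  assert (HE := energy_gen z z1 (fun t => pp mu' lam' t * z t + (pp mu' lam' t - pp mu lam t) * Y mu lam t)
                  K (eta * eta * C0 * C0 * Yb) HK).
  assert (HEth : z th * z th + z1 th * z1 th <= eta * eta * G).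
  { eapply Rle_trans; [apply HE|].
    - assert (0 <= eta * eta * C0 * C0).
      { apply Rmult_le_pos; [apply Rmult_le_pos; [apply Rmult_le_pos|]|]; lra. }
      apply Rmult_le_pos; lra.
    - intro t. unfold z, z1. apply (is_derive_eq _ _ (Y1 mu' lam' t - Y1 mu lam t)).
      + apply (is_derive_minus (Y mu' lam') (Y mu lam)); apply Y_der.
      + reflexivity.
    - intro t. unfold z1, z. apply (is_derive_eq _ _ (pp mu' lam' t * Y mu' lam' t - pp mu lam t * Y mu lam t)).
      + apply (is_derive_minus (Y1 mu' lam') (Y1 mu lam)); apply Y1_der.
      + unfold z. reqR. ring.
    - intros t Ht. pose proof (Hp' t ltac:(lra)) as Hq. pose proof (Hdelta t ltac:(lra)) as Hd.
      pose proof (Y_energy mu lam t ltac:(lra)) as HY. fold Yb in HY.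
      cbv beta. set (d := pp mu' lam' t - pp mu lam t) in *.
      set (a := z t) in *; set (b := z1 t) in *; set (q := pp mu' lam' t) in *; set (y := Y mu lam t) in *; set (y1 := Y1 mu lam t) in *.
      assert (H1 : 2 * b * (q * a) <= Pb * (a * a + b * b)).
      { assert (Hq2 : 2 * b * (q * a) <= Rabs q * (a * a + b * b)).
        { apply ab_ineq. }
        assert (0 <= a * a + b * b) by (pose proof (Rle_0_sqr a); pose proof (Rle_0_sqr b); unfold Rsqr in *; lra).
        assert (Rabs q * (a * a + b * b) <= Pb * (a * a + b * b)) by (apply Rmult_le_compat_r; lra).
        lra. }
      assert (H2 : 2 * b * (d * y) <= b * b + d * d * (y * y)).
      { pose proof (Rle_0_sqr (b - d * y)); unfold Rsqr in *; lra. }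
      assert (H3 : d * d <= eta * C0 * (eta * C0)).
      { pose proof (Rsqr_abs d) as Hsd. unfold Rsqr in Hsd. rewrite Hsd.
        assert (0 <= Rabs d) by apply Rabs_pos. apply Rmult_le_compat; lra. }
      assert (H4 : y * y <= Yb) by (pose proof (Rle_0_sqr y1); unfold Rsqr in *; lra).
      assert (H5 : d * d * (y * y) <= eta * C0 * (eta * C0) * Yb).
      { apply Rmult_le_compat; try lra; apply Rle_0_sqr. }
      pose proof (Rle_0_sqr (a - b)). unfold Rsqr in *.
      pose proof (Rle_0_sqr a). unfold Rsqr in *. unfold K. lra.
    - exact Hth.
    - unfold z, z1. rewrite !Y_tmin, !Y1_tmin.
      replace ((1 - 1) * (1 - 1) + (0 - 0) * (0 - 0)) with 0 by ring. rewrite Rplus_0_l.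
      unfold G. apply Rle_trans with (eta * eta * C0 * C0 * Yb / K * exp (K * (tmax - tmin))).
      + apply Rmult_le_compat_l.
        * apply Rdiv_le_0_compat; [|lra].
          apply Rmult_le_pos; [apply Rmult_le_pos; [apply Rmult_le_pos; [apply Rmult_le_pos|]|]|]; lra.
        * destruct (Req_dec th tmax) as [->|]; [lra|]. left; apply exp_increasing.
          apply Rmult_lt_compat_l; lra.
      + right. field. lra. }
  pose proof (Rle_0_sqr (z th)); pose proof (Rle_0_sqr (z1 th)). unfold Rsqr in *.
  unfold z, z1 in *. split; apply sq_lt_abs; lra.
Qed.

End ODE.

Open Scope R_scope.

Lemma cont_pos_near (f : R -> R) x : continuity_pt f x -> 0 < f x ->
  exists d, 0 < d /\ forall y, Rabs (y - x) < d -> 0 < f y.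
Proof.
  intros Hc Hp. destruct (Hc (f x) Hp) as [d [Hd H]].
  exists d; split; [lra|]. intros y Hy.
  destruct (Req_dec y x) as [->|Hne]; [lra|].
  assert (Hl : R_dist (f y) (f x) < f x).
  { apply H. split; [split; [exact I| auto]| exact Hy]. }
  unfold R_dist in Hl. apply Rabs_def2 in Hl. lra.
Qed.

Section Shoot.
Variables tmin tmax alpha : R.
Hypothesis Halpha : 0 < alpha.
Hypothesis Htmin : 0 < tmin.
Hypothesis Htmm : tmin < tmax.

Notation Yf := (Y tmin alpha).
Notation Y1f := (Y1 tmin alpha).
Notation ppf := (pp alpha).

Lemma Yd mu lam th : is_derive (Yf mu lam) th (Y1f mu lam th).
Proof. apply Y_der. Qed.
Lemma Y1d mu lam th : is_derive (Y1f mu lam) th (ppf mu lam th * Yf mu lam th).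
Proof. apply Y1_der; auto. Qed.
Lemma Yt mu lam : Yf mu lam tmin = 1. Proof. apply Y_tmin. Qed.
Lemma Y1t mu lam : Y1f mu lam tmin = 0. Proof. apply Y1_tmin. Qed.
Lemma Yc mu lam th : continuity_pt (Yf mu lam) th. Proof. apply Y_cont. Qed.
Lemma Y1c mu lam th : continuity_pt (Y1f mu lam) th. Proof. apply Y1_cont; auto. Qed.

Definition inI th := tmin <= th <= tmax.

Lemma zero_contra mu lam s0 : tmin < s0 <= tmax ->
  Yf mu lam s0 = 0 -> Y1f mu lam s0 = 0 -> False.
Proof.
  intros Hs HY HY1.
  set (K := KK tmax alpha mu lam).
  assert (H := gronwall_bwd (fun t => Yf mu lam t * Yf mu lam t + Y1f mu lam t * Y1f mu lam t)
     (fun t => 2 * Yf mu lam t * Y1f mu lam t + 2 * Y1f mu lam t * (ppf mu lam t * Yf mu lam t))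
     K tmin s0).
  assert (Hr : (Yf mu lam tmin * Yf mu lam tmin + Y1f mu lam tmin * Y1f mu lam tmin) * exp (K * tmin)
               <= (Yf mu lam s0 * Yf mu lam s0 + Y1f mu lam s0 * Y1f mu lam s0) * exp (K * s0)).
  { apply H; [| | |lra].
    - intros x _. apply (derive_cont _ _ (2 * Yf mu lam x * Y1f mu lam x + 2 * Y1f mu lam x * (ppf mu lam x * Yf mu lam x))).
      pose proof (Yd mu lam x); pose proof (Y1d mu lam x). ader. ring.
    - intros x _. pose proof (Yd mu lam x); pose proof (Y1d mu lam x). ader. ring.
    - intros x Hx. pose proof (pp_bound tmin tmax alpha Halpha Htmin mu lam x ltac:(lra)) as Hp.
      set (a := Yf mu lam x) in *; set (b := Y1f mu lam x); set (q := ppf mu lam x) in *.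
      assert (H1 : 2 * b * (q * (- a)) <= Rabs q * ((-a) * (-a) + b * b)) by apply ab_ineq.
      assert (H0 : 0 <= a * a + b * b) by (pose proof (Rle_0_sqr a); pose proof (Rle_0_sqr b); unfold Rsqr in *; lra).
      assert (H2 : Rabs q * (a * a + b * b) <= (Rabs mu + lam ^ 2 * tmax) / alpha * (a * a + b * b))
        by (apply Rmult_le_compat_r; lra).
      assert (H3 : 0 <= (a + b) * (a + b)) by apply Rle_0_sqr.
      unfold K, KK. lra. }
  rewrite Yt, Y1t, HY, HY1 in Hr. pose proof (exp_pos (K * tmin)). lra.
Qed.

Definition T lam mu := (forall th, inI th -> 0 < Yf mu lam th) /\ 0 < Y1f mu lam tmax.
Definition Eig lam mu := (forall th, inI th -> 0 < Yf mu lam th) /\ Y1f mu lam tmax = 0.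

Lemma T_big lam : T lam (lam ^ 2 * tmax + alpha).
Proof.
  set (mu := lam ^ 2 * tmax + alpha).
  assert (Hp : forall th, inI th -> 1 <= ppf mu lam th).
  { intros th [H1 H2]. unfold pp, mu. apply (Rmult_le_reg_r alpha); [lra|].
    unfold Rdiv. rewrite Rmult_assoc, Rinv_l, Rmult_1_r by lra.
    assert (0 <= lam ^ 2) by apply pow2_ge_0.
    assert (lam ^ 2 * th <= lam ^ 2 * tmax) by (apply Rmult_le_compat_l; lra). lra. }
  set (V := fun t => Yf mu lam t * Y1f mu lam t).
  set (dV := fun t => Y1f mu lam t * Y1f mu lam t + ppf mu lam t * (Yf mu lam t * Yf mu lam t)).
  assert (HdV : forall t, is_derive V t (dV t)).
  { intro t. unfold V, dV. pose proof (Yd mu lam t); pose proof (Y1d mu lam t). ader. ring. }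
  assert (HVc : forall t, continuity_pt V t) by (intro t; eapply derive_cont, HdV).
  assert (HV0 : V tmin = 0) by (unfold V; rewrite Y1t; ring).
  assert (HVpos : forall x, inI x -> 0 <= V x).
  { intros x Hx. rewrite <- HV0. apply (incr_gen V dV tmin x); try (unfold inI in *; lra).
    - intros; apply HVc.
    - intros; apply HdV.
    - intros t Ht. unfold dV. pose proof (Hp t ltac:(unfold inI in *; lra)).
      pose proof (Rle_0_sqr (Y1f mu lam t)); pose proof (Rle_0_sqr (Yf mu lam t)). unfold Rsqr in *.
      assert (0 <= ppf mu lam t * (Yf mu lam t * Yf mu lam t)) by (apply Rmult_le_pos; lra). lra. }
  assert (Hsq : forall x, inI x -> 1 <= Yf mu lam x * Yf mu lam x).
  { intros x Hx. replace 1 with (Yf mu lam tmin * Yf mu lam tmin) by (rewrite Yt; ring).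
    apply (incr_gen (fun t => Yf mu lam t * Yf mu lam t) (fun t => 2 * V t) tmin x); try (unfold inI in *; lra).
    - intros; apply continuity_pt_mult; apply Yc.
    - intros t _. unfold V. pose proof (Yd mu lam t). ader. ring.
    - intros t Ht. pose proof (HVpos t ltac:(unfold inI in *; lra)). lra. }
  assert (HYpos : forall x, inI x -> 0 < Yf mu lam x).
  { intros x Hx. destruct (Rlt_dec 0 (Yf mu lam x)) as [|Hn]; [auto|exfalso].
    pose proof (Hsq x Hx).
    assert (Hneg : Yf mu lam x < 0) by nra.
    destruct (IVT (fun t => - Yf mu lam t) tmin x) as [z [Hz1 Hz2]].
    - intro t. apply continuity_pt_opp, Yc.
    - destruct (Req_dec x tmin) as [->|]; [rewrite Yt in Hneg; lra| unfold inI in *; lra].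
    - rewrite Yt; lra.
    - lra.
    - pose proof (Hsq z ltac:(unfold inI in *; lra)). assert (Yf mu lam z = 0) by lra.
      rewrite H1 in H0. lra. }
  split; [exact HYpos|].
  assert (HVt : V tmin < V tmax).
  { apply (incr_strict V dV tmin tmax Htmm); auto.
    intros t Ht. unfold dV. pose proof (Hp t ltac:(unfold inI in *; lra)).
    pose proof (HYpos t ltac:(unfold inI in *; lra)).
    pose proof (Rle_0_sqr (Y1f mu lam t)). unfold Rsqr in *.
    assert (0 < Yf mu lam t * Yf mu lam t) by (apply Rmult_lt_0_compat; lra).
    assert (0 < ppf mu lam t * (Yf mu lam t * Yf mu lam t)) by (apply Rmult_lt_0_compat; lra). lra. }
  rewrite HV0 in HVt. unfold V in HVt.
  pose proof (HYpos tmax ltac:(unfold inI; lra)).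
  destruct (Rlt_dec 0 (Y1f mu lam tmax)) as [|Hn]; auto.
  exfalso. assert (Y1f mu lam tmax <= 0) by lra.
  assert (Yf mu lam tmax * Y1f mu lam tmax <= 0).
  { rewrite <- (Rmult_0_r (Yf mu lam tmax)). apply Rmult_le_compat_l; lra. }
  lra.
Qed.

Lemma T_low lam mu : T lam mu -> lam ^ 2 * tmin < mu.
Proof.
  intros [HY HY1]. destruct (Rlt_dec (lam ^ 2 * tmin) mu) as [|Hn]; auto. exfalso.
  assert (Y1f mu lam tmax <= Y1f mu lam tmin).
  { apply (decr_gen (Y1f mu lam) (fun t => ppf mu lam t * Yf mu lam t) tmin tmax); try lra.
    - intros; apply Y1c.
    - intros; apply Y1d.
    - intros t Ht. pose proof (HY t ltac:(unfold inI; lra)).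
      assert (ppf mu lam t <= 0).
      { unfold pp. apply Rmult_le_reg_r with alpha; [lra|]. unfold Rdiv.
        rewrite Rmult_assoc, Rinv_l, Rmult_1_r, Rmult_0_l by lra.
        assert (0 <= lam ^ 2) by apply pow2_ge_0.
        assert (lam ^ 2 * tmin <= lam ^ 2 * t) by (apply Rmult_le_compat_l; lra). lra. }
      rewrite <- (Rmult_0_l (Yf mu lam t)). apply Rmult_le_compat_r; lra. }
  rewrite Y1t in H. lra.
Qed.

Lemma exists_eig lam : exists mu, Eig lam mu.
Proof.
  set (E := fun x => T lam (- x)).
  assert (Hb : bound E).
  { exists (- (lam ^ 2 * tmin)). intros x Hx. apply T_low in Hx. lra. }
  assert (Hne : exists x, E x).
  { exists (- (lam ^ 2 * tmax + alpha)). unfold E. rewrite Ropp_involutive. apply T_big. }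
  destruct (completeness E Hb Hne) as [M [HM1 HM2]].
  set (ms := - M).
  assert (Inf1 : forall mu, T lam mu -> ms <= mu).
  { intros mu Hmu. unfold ms. assert (E (- mu)) by (unfold E; rewrite Ropp_involutive; auto).
    specialize (HM1 _ H). lra. }
  assert (Inf2 : forall e, 0 < e -> exists mu, T lam mu /\ mu < ms + e).
  { intros e He. apply NNPP. intro Hn.
    assert (is_upper_bound E (M - e)).
    { intros x Hx. destruct (Rle_dec x (M - e)); auto. exfalso. apply Hn.
      exists (- x). split; [exact Hx| unfold ms; lra]. }
    specialize (HM2 _ H). lra. }
  assert (StepA : (forall th, inI th -> 0 <= Yf ms lam th) /\ 0 <= Y1f ms lam tmax).
  { assert (Hall : forall e, 0 < e -> (forall th, inI th -> - e < Yf ms lam th) /\ - e < Y1f ms lam tmax).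
    { intros e He. destruct (Y_cont_param tmin tmax alpha Halpha Htmin Htmm ms lam e He) as [eta [Heta Hc]].
      destruct (Inf2 eta Heta) as [mu [[HT1 HT2] Hmu]].
      assert (Hm : Rabs (mu - ms) < eta).
      { pose proof (Inf1 mu (conj HT1 HT2)). rewrite Rabs_right; lra. }
      assert (Hl : Rabs (lam - lam) < eta) by (replace (lam - lam) with 0 by ring; rewrite Rabs_R0; lra).
      split.
      - intros th Hth. destruct (Hc mu lam Hm Hl th Hth) as [H1 _]. apply Rabs_def2 in H1.
        pose proof (HT1 th Hth). lra.
      - destruct (Hc mu lam Hm Hl tmax ltac:(lra)) as [_ H1]. apply Rabs_def2 in H1. lra. }
    split.
    - intros th Hth. destruct (Rle_dec 0 (Yf ms lam th)) as [|Hn]; auto. exfalso.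
      destruct (Hall (- Yf ms lam th / 2) ltac:(lra)) as [H _]. specialize (H th Hth). lra.
    - destruct (Rle_dec 0 (Y1f ms lam tmax)) as [|Hn]; auto. exfalso.
      destruct (Hall (- Y1f ms lam tmax / 2) ltac:(lra)) as [_ H]. lra. }
  destruct StepA as [HA1 HA2].
  assert (StepB : ~ T lam ms).
  { intros [HT1 HT2].
    destruct (continuity_ab_min (Yf ms lam) tmin tmax ltac:(lra) (fun c _ => Yc ms lam c)) as [xm [Hxm1 Hxm2]].
    set (m0 := Yf ms lam xm). assert (Hm0 : 0 < m0) by (apply HT1; exact Hxm2).
    set (e := Rmin m0 (Y1f ms lam tmax)).
    assert (He : 0 < e) by (apply Rmin_glb_lt; lra).
    assert (He1 : e <= m0) by apply Rmin_l. assert (He2 : e <= Y1f ms lam tmax) by apply Rmin_r.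
    destruct (Y_cont_param tmin tmax alpha Halpha Htmin Htmm ms lam e He) as [eta [Heta Hc]].
    assert (Hm : Rabs ((ms - eta / 2) - ms) < eta) by (rewrite Rabs_left; lra).
    assert (Hl : Rabs (lam - lam) < eta) by (replace (lam - lam) with 0 by ring; rewrite Rabs_R0; lra).
    assert (HT : T lam (ms - eta / 2)).
    { split.
      - intros th Hth. destruct (Hc _ _ Hm Hl th Hth) as [H1 _]. apply Rabs_def2 in H1.
        pose proof (Hxm1 th Hth). fold m0 in H. lra.
      - destruct (Hc _ _ Hm Hl tmax ltac:(unfold inI; lra)) as [_ H1]. apply Rabs_def2 in H1. lra. }
    apply Inf1 in HT. lra. }
  exists ms.
  destruct (classic (forall th, inI th -> 0 < Yf ms lam th)) as [Hpos|Hnpos].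
  - split; [exact Hpos|]. destruct (Rle_lt_or_eq_dec 0 _ HA2) as [Hlt|Heq]; [|auto].
    exfalso; apply StepB; split; auto.
  - exfalso. apply not_all_ex_not in Hnpos. destruct Hnpos as [th0 Hth0].
    apply imply_to_and in Hth0. destruct Hth0 as [Hin Hle].
    assert (Hz : Yf ms lam th0 = 0) by (pose proof (HA1 th0 Hin); lra).
    assert (Hnt : th0 <> tmin) by (intro; subst; rewrite Yt in Hz; lra).
    destruct (Req_dec th0 tmax) as [Heq|Hne2].
    + subst th0. apply (zero_contra ms lam tmax); [lra|exact Hz|].
      destruct (Rle_lt_or_eq_dec 0 _ HA2) as [Hlt|Heq]; [|auto].
      exfalso. destruct (cont_pos_near (Y1f ms lam) tmax (Y1c ms lam tmax) Hlt) as [d [Hd Hnear]].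
      set (x0 := Rmax tmin (tmax - d / 2)).
      assert (Hx0 : tmin <= x0 < tmax).
      { unfold x0. split; [apply Rmax_l|]. apply Rmax_lub_lt; lra. }
      destruct (MVT_open (Yf ms lam) (Y1f ms lam) x0 tmax ltac:(lra)) as [c [Hc1 Hc2]].
      * intros; apply Yc.
      * intros; apply Yd.
      * assert (Hc3 : 0 < Y1f ms lam c).
        { apply Hnear. rewrite Rabs_left by lra.
          assert (tmax - d / 2 <= x0) by (unfold x0; apply Rmax_r). lra. }
        pose proof (HA1 x0 ltac:(unfold inI; lra)). rewrite Hz in Hc2.
        assert (0 < Y1f ms lam c * (tmax - x0)) by (apply Rmult_lt_0_compat; lra). lra.
    + apply (zero_contra ms lam th0); [unfold inI in *; lra|exact Hz|].
      assert (pr := is_derive_derivable _ _ _ (Yd ms lam th0)).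
      rewrite <- (derive_pt_eq_0 _ _ _ pr (proj1 (is_derive_Reals _ _ _) (Yd ms lam th0))).
      apply (deriv_minimum _ tmin tmax); [unfold inI in *; lra| unfold inI in *; lra|].
      intros x Hx1 Hx2. rewrite Hz. apply HA1. unfold inI; lra.
Qed.

End Shoot.

Open Scope R_scope.

Definition gcont (f : R -> R) := forall x, continuity_pt f x.

Lemma gcont_ex (f : R -> R) a b : gcont f -> ex_RInt f a b.
Proof.
  intro H. apply (ex_RInt_continuous (V := R_CompleteNormedModule)). intros z _. apply continuity_pt_filterlim, H.
Qed.

Lemma RInt_pos (f : R -> R) a b : a < b -> gcont f -> (forall x, a < x < b -> 0 < f x) ->
  0 < RInt f a b.
Proof.
  intros Hab Hc Hp. apply RInt_gt_0; auto.
  intros x _. apply continuity_pt_filterlim, Hc.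
Qed.

Lemma RInt_lin (f g : R -> R) c1 c2 a b : ex_RInt f a b -> ex_RInt g a b ->
  RInt (fun x => c1 * f x + c2 * g x) a b = c1 * RInt f a b + c2 * RInt g a b.
Proof.
  intros Hf Hg.
  transitivity (RInt (fun x => plus (scal c1 (f x)) (scal c2 (g x))) a b).
  { apply RInt_ext. intros; reflexivity. }
  rewrite (RInt_plus (V:=R_CompleteNormedModule)).
  - rewrite !(RInt_scal (V:=R_CompleteNormedModule)) by auto. reflexivity.
  - apply (ex_RInt_scal (V:=R_CompleteNormedModule)); auto.
  - apply (ex_RInt_scal (V:=R_CompleteNormedModule)); auto.
Qed.

Lemma RInt_scal1 (f : R -> R) c a b : ex_RInt f a b -> RInt (fun x => c * f x) a b = c * RInt f a b.
Proof.
  intro H.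
  transitivity (RInt (fun x => scal c (f x)) a b); [reflexivity|].
  rewrite (RInt_scal (V:=R_CompleteNormedModule)) by auto. reflexivity.
Qed.

Lemma gcont_mult f g : gcont f -> gcont g -> gcont (fun x => f x * g x).
Proof. intros Hf Hg x. apply continuity_pt_mult; auto. Qed.
Lemma gcont_plus f g : gcont f -> gcont g -> gcont (fun x => f x + g x).
Proof. intros Hf Hg x. apply continuity_pt_plus; auto. Qed.
Lemma gcont_minus f g : gcont f -> gcont g -> gcont (fun x => f x - g x).
Proof. intros Hf Hg x. apply continuity_pt_minus; auto. Qed.
Lemma gcont_const c : gcont (fun _ => c).
Proof. intros x. apply continuity_pt_const. intros ??; reflexivity. Qed.
Lemma gcont_id : gcont (fun x => x).
Proof. intros x. apply derivable_continuous_pt, derivable_pt_id. Qed.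

Lemma RInt_diff (F f : R -> R) a b : a <= b -> (forall x, is_derive F x (f x)) -> gcont f ->
  RInt f a b = F b - F a.
Proof.
  intros Hab Hd Hc. apply (is_RInt_unique (V:=R_CompleteNormedModule)).
  apply (is_RInt_derive (V:=R_CompleteNormedModule) F f a b); intros; auto.
  apply continuity_pt_filterlim, Hc.
Qed.

Lemma mean_gt (Y g : R -> R) a b m : a < m < b -> gcont Y -> gcont g ->
  (forall x y, a <= x -> x < y -> y <= b -> Y x < Y y) ->
  (forall x, a <= x <= b -> 0 < g x) ->
  0 < RInt (fun x => (x - m) * (Y x - Y m) * g x) a b.
Proof.
  intros Hm HY Hg Hinc Hgp.
  set (F := fun x => (x - m) * (Y x - Y m) * g x).
  assert (HF : gcont F).
  { unfold F. apply gcont_mult; [apply gcont_mult|]; auto;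
    apply gcont_minus; auto using gcont_id, gcont_const. }
  rewrite <- (RInt_Chasles (V:=R_CompleteNormedModule) F a m b) by (apply gcont_ex; auto).
  unfold plus; simpl.
  assert (0 < RInt F a m).
  { apply RInt_pos; [lra|auto|]. intros x Hx. unfold F.
    pose proof (Hinc x m ltac:(lra) ltac:(lra) ltac:(lra)). pose proof (Hgp x ltac:(lra)).
    apply Rmult_lt_0_compat; [|lra]. replace ((x - m) * (Y x - Y m)) with ((m - x) * (Y m - Y x)) by ring.
    apply Rmult_lt_0_compat; lra. }
  assert (0 < RInt F m b).
  { apply RInt_pos; [lra|auto|]. intros x Hx. unfold F.
    pose proof (Hinc m x ltac:(lra) ltac:(lra) ltac:(lra)). pose proof (Hgp x ltac:(lra)).
    apply Rmult_lt_0_compat; [|lra]. apply Rmult_lt_0_compat; lra. }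
  lra.
Qed.

Open Scope R_scope.

Lemma convex_of_deriv (f df : R -> R) a b : (forall x, is_derive f x (df x)) ->
  (forall x y, a <= x -> x <= y -> y <= b -> df x <= df y) -> convex_on f a b.
Proof.
  intros Hd Hm x y t Hx Hy Ht.
  set (z := t * x + (1 - t) * y).
  assert (Hc : forall u, continuity_pt f u) by (intro u; eapply derive_cont, Hd).
  destruct (MVT_gen f x z df) as [c1 [Hc1 E1]]; [intros; apply Hd| intros; apply Hc|].
  destruct (MVT_gen f z y df) as [c2 [Hc2 E2]]; [intros; apply Hd| intros; apply Hc|].
  assert (Hs : 0 <= (y - x) * (df c2 - df c1)).
  { destruct (Rle_dec x y) as [Hxy|Hxy].
    - assert (x <= z <= y).
      { unfold z. split.
        + assert (t * x + (1 - t) * y - x = (1 - t) * (y - x)) by ring.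
          assert (0 <= (1 - t) * (y - x)) by (apply Rmult_le_pos; lra). lra.
        + assert (y - (t * x + (1 - t) * y) = t * (y - x)) by ring.
          assert (0 <= t * (y - x)) by (apply Rmult_le_pos; lra). lra. }
      rewrite Rmin_left, Rmax_right in Hc1 by lra.
      rewrite Rmin_left, Rmax_right in Hc2 by lra.
      assert (df c1 <= df c2) by (apply Hm; lra).
      apply Rmult_le_pos; lra.
    - assert (y <= z <= x).
      { unfold z. split.
        + assert (t * x + (1 - t) * y - y = t * (x - y)) by ring.
          assert (0 <= t * (x - y)) by (apply Rmult_le_pos; lra). lra.
        + assert (x - (t * x + (1 - t) * y) = (1 - t) * (x - y)) by ring.
          assert (0 <= (1 - t) * (x - y)) by (apply Rmult_le_pos; lra). lra. }
      rewrite Rmin_right, Rmax_left in Hc1 by lra.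
      rewrite Rmin_right, Rmax_left in Hc2 by lra.
      assert (df c2 <= df c1) by (apply Hm; lra).
      replace ((y - x) * (df c2 - df c1)) with ((x - y) * (df c1 - df c2)) by ring.
      apply Rmult_le_pos; lra. }
  assert (Heq : t * f x + (1 - t) * f y - f z = t * (1 - t) * ((y - x) * (df c2 - df c1))).
  { replace (t * f x + (1 - t) * f y - f z) with (- t * (f z - f x) + (1 - t) * (f y - f z)) by ring.
    rewrite E1, E2. unfold z. ring. }
  assert (0 <= t * (1 - t)) by (apply Rmult_le_pos; lra).
  assert (0 <= t * (1 - t) * ((y - x) * (df c2 - df c1))) by (apply Rmult_le_pos; lra).
  lra.
Qed.

Lemma concave_of_deriv (f df : R -> R) a b : (forall x, is_derive f x (df x)) ->
  (forall x y, a <= x -> x <= y -> y <= b -> df y <= df x) -> concave_on f a b.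
Proof.
  intros Hd Hm x y t Hx Hy Ht.
  assert (H := convex_of_deriv (fun u => - f u) (fun u => - df u) a b).
  assert (Hc : convex_on (fun u => - f u) a b).
  { apply H.
    - intro u. apply (is_derive_opp f u (df u)); auto.
    - intros u v H1 H2 H3. specialize (Hm u v H1 H2 H3). lra. }
  specialize (Hc x y t Hx Hy Ht). simpl in Hc. lra.
Qed.

Section Eigen.
Variables tmin tmax alpha : R.
Hypothesis Halpha : 0 < alpha.
Hypothesis Htmin : 0 < tmin.
Hypothesis Htmm : tmin < tmax.

Notation Yf := (Y tmin alpha).
Notation Y1f := (Y1 tmin alpha).
Notation ppf := (pp alpha).
Notation EigL := (Eig tmin tmax alpha).

Let Yd' := Yd tmin alpha.
Let Y1d' := Y1d tmin alpha Halpha.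
Let Yc' := Yc tmin alpha.
Let Y1c' := Y1c tmin alpha Halpha.
Let Yt' := Yt tmin alpha.
Let Y1t' := Y1t tmin alpha.

Lemma Ygc mu lam : gcont (Yf mu lam). Proof. intro; apply Yc'. Qed.
Lemma Y1gc mu lam : gcont (Y1f mu lam). Proof. intro; apply Y1c'. Qed.

Lemma pair_rolle lam1 mu1 lam2 mu2 : EigL lam1 mu1 -> EigL lam2 mu2 ->
  exists xi, tmin <= xi <= tmax /\ mu1 - mu2 = (lam1 ^ 2 - lam2 ^ 2) * xi.
Proof.
  intros [P1 Z1] [P2 Z2].
  set (W := fun t => Y1f mu1 lam1 t * Yf mu2 lam2 t - Yf mu1 lam1 t * Y1f mu2 lam2 t).
  set (dW := fun t => (ppf mu1 lam1 t - ppf mu2 lam2 t) * (Yf mu1 lam1 t * Yf mu2 lam2 t)).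
  destruct (MVT_open W dW tmin tmax Htmm) as [c [Hc HcE]].
  - intros x _. unfold W. apply continuity_pt_minus; apply continuity_pt_mult; auto.
  - intros x _. unfold W, dW.
    pose proof (Yd' mu1 lam1 x); pose proof (Yd' mu2 lam2 x);
    pose proof (Y1d' mu1 lam1 x); pose proof (Y1d' mu2 lam2 x). ader. ring.
  - unfold W in HcE. rewrite Z1, Z2, !Y1t' in HcE.
    assert (HY : 0 < Yf mu1 lam1 c * Yf mu2 lam2 c).
    { apply Rmult_lt_0_compat; [apply P1|apply P2]; unfold inI; lra. }
    assert (Hd : dW c = 0).
    { assert (dW c * (tmax - tmin) = 0) by lra.
      apply Rmult_integral in H. destruct H; [auto|lra]. }
    unfold dW in Hd. apply Rmult_integral in Hd. destruct Hd as [Hd|Hd]; [|lra].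
    exists c. split; [lra|]. unfold pp in Hd.
    apply (Rmult_eq_compat_r alpha) in Hd. unfold Rdiv in Hd.
    replace ((((mu1 - lam1 ^ 2 * c) * / alpha - (mu2 - lam2 ^ 2 * c) * / alpha)) * alpha)
      with ((mu1 - lam1 ^ 2 * c) - (mu2 - lam2 ^ 2 * c)) in Hd by (field; lra).
    lra.
Qed.

Lemma eig_unique lam mu1 mu2 : EigL lam mu1 -> EigL lam mu2 -> mu1 = mu2.
Proof.
  intros H1 H2. destruct (pair_rolle _ _ _ _ H1 H2) as [xi [_ Hx]]. ring_simplify in Hx. lra.
Qed.

Lemma lam_nz lam : 0 < lam ^ 2 -> lam <> 0.
Proof. intros H E; subst; simpl in H; lra. Qed.

Lemma pp_pos mu lam th : 0 < lam ^ 2 -> th < mu / lam ^ 2 -> 0 < ppf mu lam th.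
Proof.
  intros Hl Hth. pose proof (lam_nz lam Hl). unfold pp. apply Rdiv_lt_0_compat; [|lra].
  apply (Rmult_lt_compat_l (lam ^ 2)) in Hth; [|lra].
  replace (lam ^ 2 * (mu / lam ^ 2)) with mu in Hth by (field; auto). lra.
Qed.

Lemma pp_neg mu lam th : 0 < lam ^ 2 -> mu / lam ^ 2 < th -> ppf mu lam th < 0.
Proof.
  intros Hl Hth. pose proof (lam_nz lam Hl).
  apply (Rmult_lt_compat_l (lam ^ 2)) in Hth; [|lra].
  replace (lam ^ 2 * (mu / lam ^ 2)) with mu in Hth by (field; auto).
  assert (0 < (lam ^ 2 * th - mu) / alpha) by (apply Rdiv_lt_0_compat; lra).
  unfold pp. replace ((mu - lam ^ 2 * th) / alpha) with (- ((lam ^ 2 * th - mu) / alpha)) by (field; lra).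
  lra.
Qed.

Lemma pp_nonneg mu lam th : 0 < lam ^ 2 -> th <= mu / lam ^ 2 -> 0 <= ppf mu lam th.
Proof.
  intros Hl Hth. destruct (Rle_lt_or_eq_dec _ _ Hth) as [H|H].
  - left; apply pp_pos; auto.
  - right. pose proof (lam_nz lam Hl). subst th. unfold pp. field_simplify; auto; lra.
Qed.

Lemma pp_nonpos mu lam th : 0 < lam ^ 2 -> mu / lam ^ 2 <= th -> ppf mu lam th <= 0.
Proof.
  intros Hl Hth. destruct (Rle_lt_or_eq_dec _ _ Hth) as [H|H].
  - left; apply pp_neg; auto.
  - right. pose proof (lam_nz lam Hl). subst th. unfold pp. field_simplify; auto; lra.
Qed.

Lemma eig_shape lam mu : lam <> 0 -> EigL lam mu ->
  tmin < mu / lam ^ 2 < tmax /\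
  (forall x, tmin < x < tmax -> 0 < Y1f mu lam x) /\
  (forall x y, tmin <= x -> x < y -> y <= tmax -> Yf mu lam x < Yf mu lam y).
Proof.
  intros Hl [HP HZ].
  assert (Hl2 : 0 < lam ^ 2) by (apply pow2_gt_0; auto).
  set (th0 := mu / lam ^ 2).
  assert (HpY : forall x, tmin <= x <= tmax -> 0 < Yf mu lam x) by (intros; apply HP; unfold inI; lra).
  assert (Hth1 : tmin < th0).
  { destruct (Rlt_dec tmin th0) as [|Hn]; auto. exfalso.
    assert (Y1f mu lam tmax < Y1f mu lam tmin).
    { apply (decr_strict (Y1f mu lam) (fun t => ppf mu lam t * Yf mu lam t) tmin tmax Htmm); auto.
      intros t Ht. pose proof (pp_neg mu lam t Hl2 ltac:(fold th0; lra)).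
      pose proof (HpY t ltac:(lra)). nra. }
    rewrite Y1t' in H. lra. }
  assert (Hth2 : th0 < tmax).
  { destruct (Rlt_dec th0 tmax) as [|Hn]; auto. exfalso.
    assert (Y1f mu lam tmin < Y1f mu lam tmax).
    { apply (incr_strict (Y1f mu lam) (fun t => ppf mu lam t * Yf mu lam t) tmin tmax Htmm); auto.
      intros t Ht. pose proof (pp_pos mu lam t Hl2 ltac:(fold th0; lra)).
      pose proof (HpY t ltac:(lra)). apply Rmult_lt_0_compat; lra. }
    rewrite Y1t' in H. lra. }
  assert (HY1 : forall x, tmin < x < tmax -> 0 < Y1f mu lam x).
  { intros x Hx. destruct (Rle_dec x th0) as [Hle|Hgt].
    - rewrite <- (Y1t' mu lam).
      apply (incr_strict (Y1f mu lam) (fun t => ppf mu lam t * Yf mu lam t) tmin x); auto; try lra.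
      intros t Ht. pose proof (pp_pos mu lam t Hl2 ltac:(fold th0; lra)).
      pose proof (HpY t ltac:(lra)). apply Rmult_lt_0_compat; lra.
    - rewrite <- HZ.
      apply (decr_strict (Y1f mu lam) (fun t => ppf mu lam t * Yf mu lam t) x tmax); auto; try lra.
      intros t Ht. pose proof (pp_neg mu lam t Hl2 ltac:(fold th0; lra)).
      pose proof (HpY t ltac:(lra)). nra. }
  split; [lra|]. split; [exact HY1|].
  intros x y Hx Hxy Hy.
  apply (incr_strict (Yf mu lam) (Y1f mu lam) x y Hxy); auto.
  intros t Ht. apply HY1. lra.
Qed.

Lemma eig_convex lam mu : lam <> 0 -> EigL lam mu ->
  convex_on (Yf mu lam) tmin (mu / lam ^ 2) /\ concave_on (Yf mu lam) (mu / lam ^ 2) tmax.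
Proof.
  intros Hl He. destruct (eig_shape lam mu Hl He) as [[H1 H2] _].
  destruct He as [HP _].
  assert (Hl2 : 0 < lam ^ 2) by (apply pow2_gt_0; auto).
  split.
  - apply (convex_of_deriv _ (Y1f mu lam)); [intro; apply Yd'|].
    intros x y Hx Hxy Hy. apply (incr_gen (Y1f mu lam) (fun t => ppf mu lam t * Yf mu lam t) x y Hxy); auto.
    intros t Ht. apply Rmult_le_pos; [apply pp_nonneg; auto; lra|]. left; apply HP; unfold inI; lra.
  - apply (concave_of_deriv _ (Y1f mu lam)); [intro; apply Yd'|].
    intros x y Hx Hxy Hy. apply (decr_gen (Y1f mu lam) (fun t => ppf mu lam t * Yf mu lam t) x y Hxy); auto.
    intros t Ht. pose proof (pp_nonpos mu lam t Hl2 ltac:(lra)). pose proof (HP t ltac:(unfold inI; lra)).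
    rewrite <- (Rmult_0_l (Yf mu lam t)). apply Rmult_le_compat_r; lra.
Qed.

Lemma eig_mean lam mu : EigL lam mu ->
  mu * RInt (Yf mu lam) tmin tmax = lam ^ 2 * RInt (fun t => t * Yf mu lam t) tmin tmax.
Proof.
  intros [_ HZ].
  assert (H := RInt_diff (Y1f mu lam) (fun t => ppf mu lam t * Yf mu lam t) tmin tmax ltac:(lra)).
  rewrite HZ, Y1t' in H.
  assert (HH : RInt (fun t => ppf mu lam t * Yf mu lam t) tmin tmax = 0).
  { rewrite H; [reqR; ring|intro; apply Y1d'|]. intro x. apply continuity_pt_mult; [|apply Yc'].
    unfold pp. apply (derive_cont _ _ (- lam ^ 2 / alpha)). auto_derive; auto. reqR. field. lra. }
  rewrite (RInt_ext _ (fun t => (mu / alpha) * Yf mu lam t + (- lam ^ 2 / alpha) * (t * Yf mu lam t))) in HH.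
  2:{ intros; unfold pp; reqR; field; lra. }
  rewrite RInt_lin in HH.
  2:{ apply gcont_ex, Ygc. }
  2:{ apply gcont_ex, gcont_mult; [apply gcont_id| apply Ygc]. }
  apply (Rmult_eq_compat_l alpha) in HH.
  replace (alpha * (mu / alpha * RInt (Yf mu lam) tmin tmax + - lam ^ 2 / alpha * RInt (fun t => t * Yf mu lam t) tmin tmax))
    with (mu * RInt (Yf mu lam) tmin tmax - lam ^ 2 * RInt (fun t => t * Yf mu lam t) tmin tmax) in HH by (field; lra).
  lra.
Qed.

Lemma pair_int lam1 mu1 lam2 mu2 : EigL lam1 mu1 -> EigL lam2 mu2 ->
  (mu1 - mu2) * RInt (fun t => Yf mu1 lam1 t * Yf mu2 lam2 t) tmin tmax =
  (lam1 ^ 2 - lam2 ^ 2) * RInt (fun t => t * (Yf mu1 lam1 t * Yf mu2 lam2 t)) tmin tmax.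
Proof.
  intros [P1 Z1] [P2 Z2].
  set (W := fun t => Y1f mu1 lam1 t * Yf mu2 lam2 t - Yf mu1 lam1 t * Y1f mu2 lam2 t).
  set (dW := fun t => (ppf mu1 lam1 t - ppf mu2 lam2 t) * (Yf mu1 lam1 t * Yf mu2 lam2 t)).
  assert (H := RInt_diff W dW tmin tmax ltac:(lra)).
  assert (HH : RInt dW tmin tmax = 0).
  { rewrite H.
    - unfold W. rewrite Z1, Z2, !Y1t'. reqR; ring.
    - intro x. unfold W, dW.
      pose proof (Yd' mu1 lam1 x); pose proof (Yd' mu2 lam2 x);
      pose proof (Y1d' mu1 lam1 x); pose proof (Y1d' mu2 lam2 x). ader. ring.
    - intro x. unfold dW. apply continuity_pt_mult; [|apply continuity_pt_mult; apply Yc'].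
      unfold pp. apply (derive_cont _ _ (- lam1 ^ 2 / alpha + lam2 ^ 2 / alpha)). auto_derive; auto. reqR. field. lra. }
  unfold dW in HH.
  rewrite (RInt_ext _ (fun t => ((mu1 - mu2) / alpha) * (Yf mu1 lam1 t * Yf mu2 lam2 t)
        + (- (lam1 ^ 2 - lam2 ^ 2) / alpha) * (t * (Yf mu1 lam1 t * Yf mu2 lam2 t)))) in HH.
  2:{ intros; unfold pp; reqR; field; lra. }
  rewrite RInt_lin in HH.
  2:{ apply gcont_ex, gcont_mult; apply Ygc. }
  2:{ apply gcont_ex, gcont_mult; [apply gcont_id| apply gcont_mult; apply Ygc]. }
  apply (Rmult_eq_compat_l alpha) in HH.
  set (I0 := RInt (fun t => Yf mu1 lam1 t * Yf mu2 lam2 t) tmin tmax) in *.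
  set (I1 := RInt (fun t => t * (Yf mu1 lam1 t * Yf mu2 lam2 t)) tmin tmax) in *.
  replace (alpha * ((mu1 - mu2) / alpha * I0 + - (lam1 ^ 2 - lam2 ^ 2) / alpha * I1))
    with ((mu1 - mu2) * I0 - (lam1 ^ 2 - lam2 ^ 2) * I1) in HH by (field; lra).
  lra.
Qed.

End Eigen.

Open Scope R_scope.

Definition clamp a b x := Rmax a (Rmin b x).

Lemma clamp_in a b x : a <= x <= b -> clamp a b x = x.
Proof. intros H. unfold clamp. rewrite Rmin_right by lra. rewrite Rmax_right by lra. reflexivity. Qed.

Lemma clamp_range a b x : a <= b -> a <= clamp a b x <= b.
Proof.
  intros H. unfold clamp. split; [apply Rmax_l|]. apply Rmax_lub; [lra| apply Rmin_l].
Qed.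

Lemma clamp_lip a b x y : a <= x <= b -> Rabs (clamp a b y - x) <= Rabs (y - x).
Proof.
  intros Hx. unfold clamp.
  destruct (Rle_dec y b) as [Hyb|Hyb].
  - rewrite Rmin_right by lra. destruct (Rle_dec a y) as [Hay|Hay].
    + rewrite Rmax_right by lra. lra.
    + rewrite Rmax_left by lra. rewrite !Rabs_left1 by lra. lra.
  - rewrite Rmin_left by lra. rewrite Rmax_right by lra.
    rewrite !Rabs_right by lra. lra.
Qed.

Lemma clamp_cont (f : R -> R) a b x : a <= x <= b ->
  limit1_in f (fun y => a <= y <= b) (f x) x ->
  continuity_pt (fun t => f (clamp a b t)) x.
Proof.
  intros Hx Hl e He. destruct (Hl e He) as [d [Hd H]].
  exists d; split; [exact Hd|]. intros y [_ Hy].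
  simpl in *. unfold R_dist in *. rewrite (clamp_in a b x Hx).
  apply H. split.
  - apply clamp_range; lra.
  - simpl. unfold R_dist. eapply Rle_lt_trans; [apply clamp_lip; exact Hx| exact Hy].
Qed.

Lemma clamp_cont_on (f : R -> R) a b x : a <= x <= b -> cont_on_closed f a b ->
  continuity_pt (fun t => f (clamp a b t)) x.
Proof. intros Hx H. apply clamp_cont; auto. Qed.

Lemma clamp_der (f : R -> R) a b x l : a < x < b -> derivable_pt_lim f x l ->
  is_derive (fun t => f (clamp a b t)) x l.
Proof.
  intros Hx Hd. apply (is_derive_ext_loc f); [| apply is_derive_Reals; exact Hd].
  assert (Hp : 0 < Rmin (x - a) (b - x)) by (apply Rmin_glb_lt; lra).
  exists (mkposreal _ Hp). intros y Hy. simpl in Hy.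
  unfold ball in Hy; simpl in Hy; unfold AbsRing_ball, abs, minus, plus, opp in Hy; simpl in Hy.
  assert (H1 := Rmin_l (x - a) (b - x)). assert (H2 := Rmin_r (x - a) (b - x)).
  apply Rabs_def2 in Hy. rewrite clamp_in; [reflexivity| lra].
Qed.

Lemma gcont_closed (f : R -> R) a b : (forall x, continuity_pt f x) -> cont_on_closed f a b.
Proof.
  intros Hc x Hx e He. destruct (Hc x e He) as [d [Hd H]].
  exists d; split; [exact Hd|]. intros y [_ Hy].
  destruct (Req_dec y x) as [->|Hne].
  - simpl. unfold R_dist. rewrite Rminus_eq_0, Rabs_R0. lra.
  - apply H. split; [split; [exact I| auto]| exact Hy].
Qed.

Open Scope R_scope.

Lemma cont_divc (f : R -> R) c x : continuity_pt f x -> c <> 0 -> continuity_pt (fun t => f t / c) x.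
Proof.
  intros H Hc. apply (continuity_pt_div f (fun _ => c)); auto.
  apply continuity_pt_const; intros ??; reflexivity.
Qed.

Lemma der_mult (f g : R -> R) x df dg : is_derive f x df -> is_derive g x dg ->
  is_derive (fun t => f t * g t) x (df * g x + f x * dg).
Proof. intros H1 H2. eapply is_derive_eq. apply (is_derive_mult f g); eauto. intros; apply Rmult_comm.
  simpl. unfold plus, mult; simpl. unfold mult; simpl. reqR. ring. Qed.

Lemma der_minus (f g : R -> R) x df dg : is_derive f x df -> is_derive g x dg ->
  is_derive (fun t => f t - g t) x (df - dg).
Proof. intros H1 H2. apply (is_derive_minus f g); auto. Qed.

Lemma der_plus (f g : R -> R) x df dg : is_derive f x df -> is_derive g x dg ->
  is_derive (fun t => f t + g t) x (df + dg).
Proof. intros H1 H2. apply (is_derive_plus f g); auto. Qed.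

Lemma der_scal (f : R -> R) k x df : is_derive f x df -> is_derive (fun t => k * f t) x (k * df).
Proof. intros H. apply (is_derive_scal f); auto. Qed.

Lemma div_mul_cancel (a b : R) : b <> 0 -> a / b * b = a.
Proof. intros; field; auto. Qed.

Lemma alg1 lam mu r X N : lam <> 0 -> N <> 0 -> mu * N = lam ^ 2 * X ->
  - lam * ((mu + r) / lam) + lam ^ 2 * (X / N) + r = 0.
Proof.
  intros Hl HN H. replace (lam ^ 2 * (X / N)) with (lam ^ 2 * X / N) by (field; auto).
  rewrite <- H. field. auto.
Qed.

Lemma sqrt_ineq c l m r : 0 < l -> 0 < m -> 0 < r -> - l * c + l ^ 2 * m + r = 0 -> c > 2 * l * m ->
  c > 2 * sqrt (r * m).
Proof.
  intros Hl Hm Hr E H.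
  assert (Hrm : 0 <= r * m) by (apply Rmult_le_pos; lra).
  pose proof (sqrt_sqrt _ Hrm) as Hs. pose proof (sqrt_pos (r * m)) as Hs0.
  set (s := sqrt (r * m)) in *.
  assert (Hr' : r = l * c - l ^ 2 * m) by lra.
  assert (Hsq : (2 * s) * (2 * s) < c * c).
  { replace ((2 * s) * (2 * s)) with (4 * (r * m)) by (rewrite <- Hs; ring).
    rewrite Hr'.
    assert (0 < (c - 2 * l * m) * (c - 2 * l * m)) by (apply Rmult_lt_0_compat; lra).
    replace (c * c) with ((c - 2 * l * m) * (c - 2 * l * m) + 4 * ((l * c - l ^ 2 * m) * m)) by ring.
    lra. }
  assert (Hc : 0 < c).
  { assert (0 < 2 * l * m) by (apply Rmult_lt_0_compat; [lra|lra]). lra. }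
  apply Rlt_gt. destruct (Rlt_dec (2 * s) c) as [|Hn]; auto. exfalso.
  assert (c <= 2 * s) by lra.
  assert (c * c <= (2 * s) * (2 * s)) by (apply Rmult_le_compat; lra). lra.
Qed.

Section Final.
Variables tmin tmax alpha r : R.
Hypothesis Htmin : 0 < tmin.
Hypothesis Htmm : tmin < tmax.
Hypothesis Halpha : 0 < alpha.
Hypothesis Hr : 0 < r.
Variable muf : R -> R.
Hypothesis Hmu : forall lam, Eig tmin tmax alpha lam (muf lam).

Notation Yf := (Y tmin alpha).
Notation Y1f := (Y1 tmin alpha).
Notation ppf := (pp alpha).

Let Yd' := Yd tmin alpha.
Let Y1d' := Y1d tmin alpha Halpha.
Let Yc' := Yc tmin alpha.
Let Y1c' := Y1c tmin alpha Halpha.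
Let Yt' := Yt tmin alpha.
Let Y1t' := Y1t tmin alpha.
Let Ygc' := Ygc tmin alpha.

Definition Nf lam := RInt (Yf (muf lam) lam) tmin tmax.
Definition cf lam := (muf lam + r) / lam.
Definition Qf lam th := Yf (muf lam) lam th / Nf lam.

Lemma Ypos lam th : tmin <= th <= tmax -> 0 < Yf (muf lam) lam th.
Proof. intros. apply (proj1 (Hmu lam)). unfold inI; lra. Qed.

Lemma Npos lam : 0 < Nf lam.
Proof. apply RInt_pos; auto. intros; apply Ypos; lra. Qed.

Lemma RInt_divN (f : R -> R) c : ex_RInt f tmin tmax ->
  RInt (fun t => f t / c) tmin tmax = RInt f tmin tmax / c.
Proof.
  intros H. rewrite (RInt_ext _ (fun t => / c * f t)).
  - rewrite RInt_scal1 by auto. unfold Rdiv; reqR; ring.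
  - intros; reqR; unfold Rdiv; ring.
Qed.

Lemma spec_ok lam : 0 < lam -> spectral_solution alpha r tmin tmax lam (cf lam) (Qf lam).
Proof.
  intros Hl. pose proof (Npos lam) as HN. set (N := Nf lam) in *. set (mu := muf lam).
  exists (fun t => Y1f mu lam t / N), (fun t => ppf mu lam t * Yf mu lam t / N).
  split; [|split; [|split; [|split; [|split]]]].
  - split; [|split; [|split; [|split]]].
    + apply gcont_closed. intro x. unfold Qf. apply cont_divc; auto. apply Rgt_not_eq, HN.
    + apply gcont_closed. intro x. apply cont_divc; auto. apply Rgt_not_eq, HN.
    + apply gcont_closed. intro x. apply (cont_divc (fun t => ppf mu lam t * Yf mu lam t)); [|lra].
      apply continuity_pt_mult; auto. unfold pp.
      apply (derive_cont _ _ (- lam ^ 2 / alpha)). auto_derive; auto. reqR. field. lra.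
    + intros x _. apply is_derive_Reals. unfold Qf. fold N. pose proof (Yd' mu lam x). ader. reqR. field. lra.
    + intros x _. apply is_derive_Reals. pose proof (Y1d' mu lam x). ader. reqR. field. lra.
  - intros th _. unfold Qf, cf. fold N mu. unfold pp. field. lra.
  - rewrite Y1t'. unfold Rdiv; ring.
  - unfold mu; rewrite (proj2 (Hmu lam)). unfold Rdiv; ring.
  - intros th Hth. unfold Qf. apply Rdiv_lt_0_compat; [apply Ypos; lra| exact HN].
  - assert (Hex : ex_RInt (Qf lam) tmin tmax).
    { apply gcont_ex. intro x. unfold Qf. apply cont_divc; auto. apply Rgt_not_eq, HN. }
    exists (ex_RInt_Reals_0 _ _ _ Hex). rewrite <- RInt_Reals.
    unfold Qf. rewrite RInt_divN by (apply gcont_ex, Ygc'). unfold N, Nf in *. reqR. field. lra.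
Qed.

Lemma uniq_ok lam c' Q' : 0 < lam -> spectral_solution alpha r tmin tmax lam c' Q' ->
  c' = cf lam /\ (forall th, tmin <= th <= tmax -> Q' th = Qf lam th).
Proof.
  intros Hl [Q1 [Q2 [[HcQ [HcQ1 [HcQ2 [HdQ HdQ1]]]] [Hode [Ha [Hb [Hpos [pr Hint]]]]]]]].
  set (mu := muf lam). set (mu' := lam * c' - r).
  assert (HQ2 : forall x, tmin < x < tmax -> Q2 x = ppf mu' lam x * Q' x).
  { intros x Hx. specialize (Hode x Hx). unfold pp, mu'.
    apply (Rmult_eq_reg_l alpha); [|lra].
    replace (alpha * ((lam * c' - r - lam ^ 2 * x) / alpha * Q' x)) with ((lam * c' - r - lam ^ 2 * x) * Q' x) by (field; lra).
    lra. }
  set (cl := clamp tmin tmax).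
  assert (Hcl : forall x, tmin <= x <= tmax -> cl x = x) by (intros; apply clamp_in; auto).
  assert (DQ : forall x, tmin < x < tmax -> is_derive (fun t => Q' (cl t)) x (Q1 x)).
  { intros x Hx. apply clamp_der; auto. }
  assert (DQ1 : forall x, tmin < x < tmax -> is_derive (fun t => Q1 (cl t)) x (ppf mu' lam x * Q' x)).
  { intros x Hx. rewrite <- HQ2 by auto. apply clamp_der; auto. }
  assert (CQ : forall x, tmin <= x <= tmax -> continuity_pt (fun t => Q' (cl t)) x).
  { intros; apply clamp_cont_on; auto. }
  assert (CQ1 : forall x, tmin <= x <= tmax -> continuity_pt (fun t => Q1 (cl t)) x).
  { intros; apply clamp_cont_on; auto. }
  assert (Hmu' : mu' = mu).
  { set (W := fun x => Q1 (cl x) * Yf mu lam x - Q' (cl x) * Y1f mu lam x).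
    set (dW := fun x => (ppf mu' lam x - ppf mu lam x) * Q' x * Yf mu lam x).
    destruct (MVT_open W dW tmin tmax Htmm) as [c [Hc HcE]].
    - intros x Hx. unfold W. apply continuity_pt_minus; apply continuity_pt_mult; auto.
    - intros x Hx. unfold W, dW. eapply is_derive_eq.
      + apply der_minus; apply der_mult; auto.
      + cbv beta. rewrite (Hcl x) by lra. reqR. ring.
    - unfold W in HcE. rewrite !Hcl in HcE by lra.
      rewrite Ha, Hb, Yt', Y1t' in HcE. unfold mu in HcE. rewrite (proj2 (Hmu lam)) in HcE.
      fold mu in HcE.
      assert (HdW : dW c = 0).
      { assert (dW c * (tmax - tmin) = 0) by lra. apply Rmult_integral in H. destruct H; [auto|lra]. }
      unfold dW in HdW. pose proof (Hpos c ltac:(lra)). pose proof (Ypos lam c ltac:(lra)).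
      apply Rmult_integral in HdW. destruct HdW as [HdW|HdW]; [|fold mu in H0; lra].
      apply Rmult_integral in HdW. destruct HdW as [HdW|HdW]; [|lra].
      unfold pp in HdW. apply (Rmult_eq_compat_l alpha) in HdW.
      replace (alpha * ((mu' - lam ^ 2 * c) / alpha - (mu - lam ^ 2 * c) / alpha)) with (mu' - mu) in HdW by (field; lra).
      lra. }
  set (k := Q' tmin).
  set (v := fun x => Q' (cl x) - k * Yf mu lam x).
  set (v1 := fun x => Q1 (cl x) - k * Y1f mu lam x).
  assert (Dv : forall x, tmin < x < tmax -> is_derive v x (v1 x)).
  { intros x Hx. unfold v, v1. rewrite (Hcl x) by lra. apply der_minus; [auto| apply der_scal, Yd']. }
  assert (Dv1 : forall x, tmin < x < tmax -> is_derive v1 x (ppf mu lam x * v x)).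
  { intros x Hx. unfold v1, v. eapply is_derive_eq.
    - apply der_minus; [apply DQ1; auto| apply der_scal, Y1d'].
    - rewrite Hmu', (Hcl x) by lra. reqR. ring. }
  set (K := KK tmax alpha mu lam).
  assert (HK : 0 < K) by (apply (KK_pos tmin tmax alpha Halpha Htmin Htmm)).
  assert (HE := gronwall_fwd (fun x => v x * v x + v1 x * v1 x)
     (fun x => 2 * v x * v1 x + 2 * v1 x * (ppf mu lam x * v x)) K 0 tmin tmax HK ltac:(lra)).
  assert (Hv0 : forall x, tmin <= x <= tmax -> v x = 0).
  { intros x Hx.
    assert (Hle : v x * v x + v1 x * v1 x <= 0).
    { eapply Rle_trans; [apply HE; auto|].
      - intros y Hy. unfold v, v1. apply continuity_pt_plus; apply continuity_pt_mult;
          apply continuity_pt_minus; auto; apply continuity_pt_mult; auto;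
          apply continuity_pt_const; intros ??; reflexivity.
      - intros y Hy. eapply is_derive_eq.
        + apply der_plus; apply der_mult; auto.
        + reqR; ring.
      - intros y Hy. pose proof (pp_bound tmin tmax alpha Halpha Htmin mu lam y ltac:(lra)) as Hp.
        set (a := v y) in *; set (b := v1 y); set (q := ppf mu lam y) in *.
        assert (H1 : 2 * b * (q * a) <= Rabs q * (a * a + b * b)) by apply ab_ineq.
        assert (H0 : 0 <= a * a + b * b) by (pose proof (Rle_0_sqr a); pose proof (Rle_0_sqr b); unfold Rsqr in *; lra).
        assert (H2 : Rabs q * (a * a + b * b) <= (Rabs mu + lam ^ 2 * tmax) / alpha * (a * a + b * b))
          by (apply Rmult_le_compat_r; lra).
        assert (H3 : 0 <= (a - b) * (a - b)) by apply Rle_0_sqr.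
        unfold K, KK. lra.
      - unfold v, v1. rewrite (Hcl tmin) by lra. rewrite Yt', Y1t', Ha. unfold k.
        replace ((Q' tmin - Q' tmin * 1) * (Q' tmin - Q' tmin * 1) + (0 - Q' tmin * 0) * (0 - Q' tmin * 0) + 0 / K)
          with 0 by (field; lra). lra. }
    pose proof (Rle_0_sqr (v x)); pose proof (Rle_0_sqr (v1 x)); unfold Rsqr in *.
    assert (v x * v x = 0) by lra. apply Rmult_integral in H1. tauto. }
  assert (HQk : forall x, tmin <= x <= tmax -> Q' x = k * Yf mu lam x).
  { intros x Hx. pose proof (Hv0 x Hx). unfold v in H. rewrite (Hcl x Hx) in H. lra. }
  assert (Hk : k * Nf lam = 1).
  { rewrite <- Hint, <- RInt_Reals. unfold Nf. fold mu.
    rewrite <- RInt_scal1 by (apply gcont_ex, Ygc').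
    apply RInt_ext. intros x Hx. rewrite Rmin_left, Rmax_right in Hx by lra.
    symmetry. apply HQk. lra. }
  pose proof (Npos lam).
  split.
  - unfold cf. fold mu. rewrite <- Hmu'. unfold mu'. field. lra.
  - intros th Hth. rewrite HQk by auto. unfold Qf. fold mu.
    assert (k = / Nf lam) by (apply (Rmult_eq_reg_r (Nf lam)); [rewrite Rinv_l; lra| lra]).
    rewrite H0. field. lra.
Qed.

Lemma mu_lip lam lam0 : Rabs (muf lam - muf lam0) <= Rabs (lam ^ 2 - lam0 ^ 2) * tmax.
Proof.
  destruct (pair_rolle tmin tmax alpha Halpha Htmm lam (muf lam) lam0 (muf lam0) (Hmu lam) (Hmu lam0))
    as [xi [Hxi E]].
  rewrite E, Rabs_mult. apply Rmult_le_compat_l; [apply Rabs_pos|]. rewrite Rabs_right; lra.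
Qed.

Lemma mu_cont lam0 e : 0 < e -> exists d, 0 < d /\ forall lam, Rabs (lam - lam0) < d ->
  Rabs (muf lam - muf lam0) < e.
Proof.
  intros He. set (C := (2 * Rabs lam0 + 1) * tmax + 1).
  assert (HC : 0 < C) by (unfold C; pose proof (Rabs_pos lam0); nra).
  set (d := Rmin 1 (e / C)).
  assert (Hd1 : d <= 1) by apply Rmin_l. assert (Hd2 : d <= e / C) by apply Rmin_r.
  assert (Hdp : 0 < d) by (apply Rmin_glb_lt; [lra| apply Rdiv_lt_0_compat; lra]).
  exists d; split; [exact Hdp|]. intros lam Hl.
  eapply Rle_lt_trans; [apply mu_lip|].
  replace (lam ^ 2 - lam0 ^ 2) with ((lam - lam0) * (lam + lam0)) by ring.
  rewrite Rabs_mult.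
  assert (Hs : Rabs (lam + lam0) <= 2 * Rabs lam0 + 1).
  { replace (lam + lam0) with ((lam - lam0) + 2 * lam0) by ring.
    eapply Rle_trans; [apply Rabs_triang|]. rewrite Rabs_mult, (Rabs_right 2) by lra. lra. }
  assert (Hdc : d * C <= e).
  { apply (Rmult_le_compat_r C) in Hd2; [|lra]. unfold Rdiv in Hd2.
    rewrite Rmult_assoc, Rinv_l, Rmult_1_r in Hd2 by lra. exact Hd2. }
  assert (H1 : Rabs (lam - lam0) * Rabs (lam + lam0) <= d * (2 * Rabs lam0 + 1)).
  { apply Rmult_le_compat; try apply Rabs_pos; lra. }
  assert (H2 : Rabs (lam - lam0) * Rabs (lam + lam0) * tmax <= d * (2 * Rabs lam0 + 1) * tmax).
  { apply Rmult_le_compat_r; lra. }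
  assert (d * (2 * Rabs lam0 + 1) * tmax < d * C) by (unfold C; nra).
  lra.
Qed.

Lemma c_cont lam0 : 0 < lam0 -> continuity_pt (cf) lam0.
Proof.
  intros Hl. unfold cf.
  apply (continuity_pt_div (fun l => muf l + r) (fun l => l)); [| |lra].
  - apply continuity_pt_plus; [|apply continuity_pt_const; intros ??; reflexivity].
    intros e He. destruct (mu_cont lam0 e He) as [d [Hd H]].
    exists d; split; [exact Hd|]. intros x [_ Hx]. apply H, Hx.
  - apply derivable_continuous_pt, derivable_pt_id.
Qed.

Lemma c_bounds lam : 0 < lam ->
  lam * tmin + r / lam < cf lam < lam * tmax + r / lam.
Proof.
  intros Hl. assert (Hl0 : lam <> 0) by lra.
  destruct (eig_shape tmin tmax alpha Halpha Htmm lam (muf lam) Hl0 (Hmu lam)) as [[H1 H2] _].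
  unfold cf. replace ((muf lam + r) / lam) with (lam * (muf lam / lam ^ 2) + r / lam) by (field; lra).
  split; apply Rplus_lt_compat_r; apply Rmult_lt_compat_l; lra.
Qed.

Lemma exists_min : exists ls, 0 < ls /\ forall lam, 0 < lam -> cf ls <= cf lam.
Proof.
  set (lo := r / (r + tmax)). set (hi := (r + tmax) / tmin).
  assert (Hlo : 0 < lo < 1).
  { unfold lo. split; [apply Rdiv_lt_0_compat; lra|]. apply (Rmult_lt_reg_r (r + tmax)); [lra|].
    unfold Rdiv. rewrite Rmult_assoc, Rinv_l by lra. lra. }
  assert (Hhi : 1 < hi).
  { unfold hi. apply (Rmult_lt_reg_r tmin); [lra|].
    unfold Rdiv. rewrite Rmult_assoc, Rinv_l by lra. lra. }
  destruct (continuity_ab_min (cf) lo hi ltac:(lra)) as [ls [Hmin Hls]].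
  { intros c Hc. apply c_cont. lra. }
  exists ls. split; [lra|].
  assert (Hc1 : cf 1 < r + tmax).
  { pose proof (c_bounds 1 ltac:(lra)). replace (1 * tmax + r / 1) with (r + tmax) in H by (field). lra. }
  assert (Hls1 : cf ls < r + tmax) by (pose proof (Hmin 1 ltac:(lra)); lra).
  intros lam Hl.
  destruct (Rle_dec lo lam) as [H1|H1]; [destruct (Rle_dec lam hi) as [H2|H2]|].
  - apply Hmin. lra.
  - pose proof (c_bounds lam Hl). assert (0 < r / lam) by (apply Rdiv_lt_0_compat; lra).
    assert (hi * tmin < lam * tmin) by (apply Rmult_lt_compat_r; lra).
    assert (hi * tmin = r + tmax) by (unfold hi; field; lra). lra.
  - pose proof (c_bounds lam Hl).
    assert (r + tmax < r / lam).
    { apply (Rmult_lt_reg_r lam); [lra|]. unfold Rdiv. rewrite Rmult_assoc, Rinv_l, Rmult_1_r by lra.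
      assert (lam * (r + tmax) < lo * (r + tmax)) by (apply Rmult_lt_compat_r; lra).
      assert (lo * (r + tmax) = r) by (unfold lo; field; lra). lra. }
    assert (0 < lam * tmin) by (apply Rmult_lt_0_compat; lra). lra.
Qed.

Lemma convex_scale (f : R -> R) N a b : 0 < N -> convex_on f a b -> convex_on (fun t => f t / N) a b.
Proof.
  intros HN H x y t Hx Hy Ht. specialize (H x y t Hx Hy Ht).
  replace (t * (f x / N) + (1 - t) * (f y / N)) with ((t * f x + (1 - t) * f y) / N) by (field; lra).
  unfold Rdiv. apply Rmult_le_compat_r; [left; apply Rinv_0_lt_compat; lra| exact H].
Qed.

Lemma concave_scale (f : R -> R) N a b : 0 < N -> concave_on f a b -> concave_on (fun t => f t / N) a b.
Proof.
  intros HN H x y t Hx Hy Ht. specialize (H x y t Hx Hy Ht).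
  replace (t * (f x / N) + (1 - t) * (f y / N)) with ((t * f x + (1 - t) * f y) / N) by (field; lra).
  unfold Rdiv. apply Rmult_le_compat_r; [left; apply Rinv_0_lt_compat; lra| exact H].
Qed.

Lemma part_i lam : 0 < lam ->
  (forall x y, tmin < x -> x < y -> y < tmax -> Qf lam x < Qf lam y) /\
  (exists th0, tmin <= th0 <= tmax /\
     - lam * cf lam + lam ^ 2 * th0 + r = 0 /\
     convex_on (Qf lam) tmin th0 /\ concave_on (Qf lam) th0 tmax).
Proof.
  intros Hl. assert (Hl0 : lam <> 0) by lra. pose proof (Npos lam) as HN.
  destruct (eig_shape tmin tmax alpha Halpha Htmm lam (muf lam) Hl0 (Hmu lam)) as [[H1 H2] [_ Hinc]].
  destruct (eig_convex tmin tmax alpha Halpha Htmm lam (muf lam) Hl0 (Hmu lam)) as [Hcv Hcc].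
  split.
  - intros x y Hx Hxy Hy. unfold Qf. unfold Rdiv. apply Rmult_lt_compat_r.
    + apply Rinv_0_lt_compat, HN.
    + apply Hinc; lra.
  - exists (muf lam / lam ^ 2). split; [lra|]. split.
    + unfold cf. field. lra.
    + split; [apply convex_scale| apply concave_scale]; auto.
Qed.

Lemma RInt_lin3 (f g h : R -> R) c1 c2 c3 : gcont f -> gcont g -> gcont h ->
  RInt (fun x => c1 * f x + c2 * g x + c3 * h x) tmin tmax =
  c1 * RInt f tmin tmax + c2 * RInt g tmin tmax + c3 * RInt h tmin tmax.
Proof.
  intros Hf Hg Hh.
  rewrite (RInt_ext _ (fun x => 1 * (c1 * f x + c2 * g x) + c3 * h x)) by (intros; reqR; ring).
  rewrite RInt_lin.
  - rewrite RInt_lin by (apply gcont_ex; auto). reqR; ring.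
  - apply gcont_ex. intro x. apply continuity_pt_plus; apply continuity_pt_mult; auto;
      apply continuity_pt_const; intros ??; reflexivity.
  - apply gcont_ex; auto.
Qed.

Lemma RInt_center m : m = (tmin + tmax) / 2 -> RInt (fun t => t - m) tmin tmax = 0.
Proof.
  intros Hm. rewrite (RInt_diff (fun t => (t - m) * (t - m) / 2)).
  - rewrite Hm. reqR. field.
  - lra.
  - intro x. auto_derive; auto. reqR. unfold Rminus. field.
  - apply gcont_minus; [apply gcont_id| apply gcont_const].
Qed.

Definition meanf lam := RInt (fun th => th * Qf lam th) tmin tmax.

Lemma meanf_eq lam : meanf lam = RInt (fun t => t * Yf (muf lam) lam t) tmin tmax / Nf lam.
Proof.
  unfold meanf, Qf. rewrite <- RInt_divN.
  - apply RInt_ext. intros; reqR; unfold Rdiv; ring.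
  - apply gcont_ex, gcont_mult; [apply gcont_id| apply Ygc'].
Qed.

Lemma meanf_is lam : mean_is (Qf lam) tmin tmax (meanf lam).
Proof.
  assert (Hex : ex_RInt (fun th => th * Qf lam th) tmin tmax).
  { apply gcont_ex. apply gcont_mult; [apply gcont_id|]. intro x. unfold Qf.
    apply cont_divc; [apply Yc'| apply Rgt_not_eq, Npos]. }
  exists (ex_RInt_Reals_0 _ _ _ Hex). rewrite <- RInt_Reals. reflexivity.
Qed.

Lemma meanf_gt lam : 0 < lam -> meanf lam > (tmax + tmin) / 2.
Proof.
  intros Hl. assert (Hl0 : lam <> 0) by lra. pose proof (Npos lam) as HN.
  destruct (eig_shape tmin tmax alpha Halpha Htmm lam (muf lam) Hl0 (Hmu lam)) as [_ [_ Hinc]].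
  set (m := (tmin + tmax) / 2). set (Yl := Yf (muf lam) lam).
  assert (H := mean_gt Yl (fun _ => 1) tmin tmax m ltac:(unfold m; lra) (Ygc' _ _) (gcont_const 1) Hinc ltac:(intros; lra)).
  rewrite (RInt_ext _ (fun t => 1 * (t * Yl t) + (- m) * Yl t + (- Yl m) * (t - m))) in H
    by (intros; reqR; ring).
  rewrite RInt_lin3 in H.
  2:{ apply gcont_mult; [apply gcont_id| apply Ygc']. }
  2:{ apply Ygc'. }
  2:{ apply gcont_minus; [apply gcont_id| apply gcont_const]. }
  rewrite RInt_center in H by reflexivity.
  rewrite meanf_eq. fold Yl. unfold Nf in *. fold Yl in HN |- *.
  apply Rlt_gt. apply (Rmult_lt_reg_r (RInt Yl tmin tmax)); [exact HN|].
  rewrite div_mul_cancel by lra. unfold m in H. lra.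
Qed.

Lemma part_ii lam : 0 < lam -> exists m, mean_is (Qf lam) tmin tmax m /\
  - lam * cf lam + lam ^ 2 * m + r = 0 /\ m > (tmax + tmin) / 2.
Proof.
  intros Hl. exists (meanf lam). split; [apply meanf_is|]. split; [|apply meanf_gt; auto].
  pose proof (eig_mean tmin tmax alpha Halpha Htmm lam (muf lam) (Hmu lam)) as HM.
  pose proof (Npos lam) as HN. rewrite meanf_eq. unfold cf, Nf in *.
  apply alg1; [lra|lra|exact HM].
Qed.

Lemma Gclose (G : R -> R) lam0 : gcont G -> forall e, 0 < e -> exists d, 0 < d /\
  forall lam, Rabs (lam - lam0) < d ->
  Rabs (RInt (fun t => G t * Yf (muf lam) lam t) tmin tmax - RInt (fun t => G t * Yf (muf lam0) lam0 t) tmin tmax) < e.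
Proof.
  intros HG e He.
  destruct (continuity_ab_maj (fun x => Rabs (G x)) tmin tmax ltac:(lra)) as [Mx [HMx _]].
  { intros c _. apply (continuity_pt_comp G Rabs); [apply HG| apply Rcontinuity_abs]. }
  set (B := Rabs (G Mx) + 1).
  assert (HB : 0 < B) by (unfold B; pose proof (Rabs_pos (G Mx)); lra).
  assert (HGB : forall t, tmin <= t <= tmax -> Rabs (G t) <= B) by (intros t Ht; pose proof (HMx t Ht); unfold B; lra).
  set (L := tmax - tmin).
  assert (HL : 0 < L) by (unfold L; lra).
  set (e' := e / (L * B + 1)).
  assert (He' : 0 < e') by (unfold e'; apply Rdiv_lt_0_compat; [lra| pose proof (Rmult_lt_0_compat _ _ HL HB); lra]).
  assert (HLBe : L * (B * e') < e).
  { unfold e'. assert (0 < L * B) by (apply Rmult_lt_0_compat; lra).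
    replace (L * (B * (e / (L * B + 1)))) with (e * (L * B / (L * B + 1))) by (field; lra).
    assert (L * B / (L * B + 1) < 1).
    { apply (Rmult_lt_reg_r (L * B + 1)); [lra|]. rewrite div_mul_cancel by lra. lra. }
    assert (e * (L * B / (L * B + 1)) < e * 1) by (apply Rmult_lt_compat_l; lra). lra. }
  destruct (Y_cont_param tmin tmax alpha Halpha Htmin Htmm (muf lam0) lam0 e' He') as [eta [Heta Hc]].
  destruct (mu_cont lam0 eta Heta) as [d1 [Hd1 Hmc]].
  exists (Rmin d1 eta). split; [apply Rmin_glb_lt; lra|].
  intros lam Hl.
  assert (Hl1 : Rabs (lam - lam0) < d1) by (eapply Rlt_le_trans; [exact Hl| apply Rmin_l]).
  assert (Hl2 : Rabs (lam - lam0) < eta) by (eapply Rlt_le_trans; [exact Hl| apply Rmin_r]).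
  specialize (Hc (muf lam) lam (Hmc lam Hl1) Hl2).
  assert (Hex1 : ex_RInt (fun t => G t * Yf (muf lam) lam t) tmin tmax) by (apply gcont_ex, gcont_mult; auto; apply Ygc').
  assert (Hex2 : ex_RInt (fun t => G t * Yf (muf lam0) lam0 t) tmin tmax) by (apply gcont_ex, gcont_mult; auto; apply Ygc').
  replace (RInt (fun t => G t * Yf (muf lam) lam t) tmin tmax - RInt (fun t => G t * Yf (muf lam0) lam0 t) tmin tmax)
    with (1 * RInt (fun t => G t * Yf (muf lam) lam t) tmin tmax + (-1) * RInt (fun t => G t * Yf (muf lam0) lam0 t) tmin tmax)
    by (reqR; ring).
  rewrite <- RInt_lin by auto.
  eapply Rle_lt_trans; [apply abs_RInt_le_const with (M := B * e')|].
  - lra.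
  - apply gcont_ex. intro x. apply continuity_pt_plus; apply continuity_pt_mult;
      try (apply continuity_pt_const; intros ??; reflexivity); apply continuity_pt_mult; auto; apply Yc'.
  - intros t Ht. replace (1 * (G t * Yf (muf lam) lam t) + -1 * (G t * Yf (muf lam0) lam0 t))
      with (G t * (Yf (muf lam) lam t - Yf (muf lam0) lam0 t)) by ring.
    rewrite Rabs_mult. destruct (Hc t Ht) as [Hc1 _].
    apply Rmult_le_compat; try apply Rabs_pos; auto. lra.
  - fold L. exact HLBe.
Qed.

Lemma part_iii ls : 0 < ls -> (forall lam, 0 < lam -> cf ls <= cf lam) ->
  cf ls > 2 * sqrt (r * meanf ls) /\ cf ls >= ls * (tmax + tmin).
Proof.
  intros Hls Hmin.
  set (Ys := Yf (muf ls) ls).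
  set (I0 := fun lam => RInt (fun t => Ys t * Yf (muf lam) lam t) tmin tmax).
  set (I1 := fun lam => RInt (fun t => t * (Ys t * Yf (muf lam) lam t)) tmin tmax).
  set (cs := cf ls).
  assert (HYs : forall t, tmin <= t <= tmax -> 0 < Ys t) by (intros; apply Ypos; auto).
  assert (HI0 : forall lam, 0 < I0 lam).
  { intro lam. unfold I0. apply RInt_pos; auto.
    - apply gcont_mult; apply Ygc'.
    - intros x Hx. apply Rmult_lt_0_compat; [apply HYs| apply Ypos]; lra. }
  assert (Hcs : muf ls + r = ls * cs) by (unfold cs, cf; field; lra).
  assert (Step1 : forall lam, 0 < lam < ls -> (ls + lam) * I1 lam <= cs * I0 lam).
  { intros lam Hl.
    pose proof (pair_int tmin tmax alpha Halpha Htmm ls (muf ls) lam (muf lam) (Hmu ls) (Hmu lam)) as HP.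
    fold Ys in HP. change (RInt (fun t => Ys t * Yf (muf lam) lam t) tmin tmax) with (I0 lam) in HP.
    change (RInt (fun t => t * (Ys t * Yf (muf lam) lam t)) tmin tmax) with (I1 lam) in HP.
    pose proof (Hmin lam ltac:(lra)) as Hm. fold cs in Hm. unfold cf in Hm.
    assert (Hlc : lam * cs <= muf lam + r).
    { apply (Rmult_le_compat_l lam) in Hm; [|lra].
      replace (lam * ((muf lam + r) / lam)) with (muf lam + r) in Hm by (field; lra). lra. }
    assert (Hd : muf ls - muf lam <= (ls - lam) * cs) by lra.
    pose proof (HI0 lam) as H0.
    assert (H2 : (ls ^ 2 - lam ^ 2) * I1 lam <= (ls - lam) * cs * I0 lam).
    { rewrite <- HP. apply Rmult_le_compat_r; lra. }
    apply (Rmult_le_reg_l (ls - lam)); [lra|].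
    replace ((ls - lam) * ((ls + lam) * I1 lam)) with ((ls ^ 2 - lam ^ 2) * I1 lam) by ring.
    replace ((ls - lam) * (cs * I0 lam)) with ((ls - lam) * cs * I0 lam) by ring. exact H2. }
  assert (Step2 : 2 * ls * I1 ls <= cs * I0 ls).
  { destruct (Rle_dec (2 * ls * I1 ls) (cs * I0 ls)) as [|Hn]; auto. exfalso.
    set (g := 2 * ls * I1 ls - cs * I0 ls). assert (Hg : 0 < g) by (unfold g; lra).
    assert (Hcs0 : 0 < cs) by (unfold cs; pose proof (c_bounds ls Hls); pose proof (Rmult_lt_0_compat _ _ Hls Htmin);
      assert (0 < r / ls) by (apply Rdiv_lt_0_compat; lra); lra).
    set (K := 2 * ls + 1 + cs). assert (HK : 0 < K) by (unfold K; lra).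
    set (e := g / (4 * K)). assert (He : 0 < e) by (unfold e; apply Rdiv_lt_0_compat; lra).
    destruct (Gclose Ys ls (Ygc' _ _) e He) as [d1 [Hd1 Hc1]].
    destruct (Gclose (fun t => t * Ys t) ls (gcont_mult _ _ gcont_id (Ygc' _ _)) e He) as [d2 [Hd2 Hc2]].
    set (A := Rabs (I1 ls) + 1). assert (HA : 0 < A) by (unfold A; pose proof (Rabs_pos (I1 ls)); lra).
    set (d := Rmin (Rmin (Rmin (d1 / 2) (d2 / 2)) (ls / 2)) (g / (4 * A))).
    assert (Hdp : 0 < d).
    { unfold d. repeat apply Rmin_glb_lt; try lra; apply Rdiv_lt_0_compat; lra. }
    assert (Hdd1 : d <= d1 / 2) by (unfold d; eapply Rle_trans; [apply Rmin_l|]; eapply Rle_trans; [apply Rmin_l| apply Rmin_l]).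
    assert (Hdd2 : d <= d2 / 2) by (unfold d; eapply Rle_trans; [apply Rmin_l|]; eapply Rle_trans; [apply Rmin_l| apply Rmin_r]).
    assert (Hdd3 : d <= ls / 2) by (unfold d; eapply Rle_trans; [apply Rmin_l| apply Rmin_r]).
    assert (Hdd4 : d <= g / (4 * A)) by (unfold d; apply Rmin_r).
    set (lam := ls - d).
    assert (Hlam : Rabs (lam - ls) = d) by (unfold lam; rewrite Rabs_left; lra).
    specialize (Hc1 lam ltac:(lra)). specialize (Hc2 lam ltac:(lra)).
    rewrite (RInt_ext (fun t => t * Ys t * Yf (muf lam) lam t) (fun t => t * (Ys t * Yf (muf lam) lam t))) in Hc2
      by (intros; reqR; ring).
    rewrite (RInt_ext (fun t => t * Ys t * Yf (muf ls) ls t) (fun t => t * (Ys t * Yf (muf ls) ls t))) in Hc2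
      by (intros; reqR; ring).
    change (RInt (fun t => t * (Ys t * Yf (muf lam) lam t)) tmin tmax) with (I1 lam) in Hc2.
    change (RInt (fun t => t * (Ys t * Yf (muf ls) ls t)) tmin tmax) with (I1 ls) in Hc2.
    change (RInt (fun t => Ys t * Yf (muf lam) lam t) tmin tmax) with (I0 lam) in Hc1.
    change (RInt (fun t => Ys t * Yf (muf ls) ls t) tmin tmax) with (I0 ls) in Hc1.
    pose proof (Step1 lam ltac:(unfold lam; lra)) as S1.
    apply Rabs_def2 in Hc1. apply Rabs_def2 in Hc2.
    assert (B1 : (ls + lam) * (I1 lam - I1 ls) >= - ((2 * ls + 1) * e)).
    { assert (Habs : Rabs ((ls + lam) * (I1 lam - I1 ls)) <= (2 * ls + 1) * e).
      { rewrite Rabs_mult. apply Rmult_le_compat; try apply Rabs_pos.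
        - rewrite Rabs_right; unfold lam; lra.
        - left; apply Rabs_def1; lra. }
      apply Rabs_le_between in Habs. lra. }
    assert (B2 : d * Rabs (I1 ls) <= g / 4).
    { assert (d * Rabs (I1 ls) <= g / (4 * A) * A).
      { apply Rmult_le_compat; try lra; try apply Rabs_pos. unfold A; lra. }
      replace (g / (4 * A) * A) with (g / 4) in H by (field; lra). exact H. }
    assert (B3 : - (d * Rabs (I1 ls)) <= (lam - ls) * I1 ls).
    { replace (lam - ls) with (- d) by (unfold lam; ring).
      destruct (Rle_dec 0 (I1 ls)).
      + rewrite Rabs_right by lra. assert (0 <= d * I1 ls) by (apply Rmult_le_pos; lra). lra.
      + rewrite Rabs_left by lra. assert (0 <= d * (- I1 ls)) by (apply Rmult_le_pos; lra). lra. }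
    assert (B4 : cs * (I0 lam - I0 ls) <= cs * e).
    { apply Rmult_le_compat_l; lra. }
    assert (HKe : K * e = g / 4) by (unfold e; field; lra).
    unfold K in HKe.
    assert (Hexp : (ls + lam) * I1 lam - cs * I0 lam =
                   g + (ls + lam) * (I1 lam - I1 ls) + (lam - ls) * I1 ls - cs * (I0 lam - I0 ls)) by (unfold g; ring).
    assert (cs * e + (2 * ls + 1) * e = g / 4) by lra.
    lra. }
  set (Ns := Nf ls).
  pose proof (Npos ls) as HN. fold Ns in HN.
  set (J := RInt (fun t => t * Ys t) tmin tmax).
  set (ms := J / Ns).
  assert (Hms : meanf ls = ms) by (rewrite meanf_eq; reflexivity).
  assert (HJ : @eq R J (ms * Ns)) by (unfold ms; symmetry; apply div_mul_cancel; lra).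
  assert (Hms1 : tmin < ms).
  { assert (0 < RInt (fun t => 1 * (t * Ys t) + (- tmin) * Ys t) tmin tmax).
    { apply RInt_pos; [lra| |].
      - apply gcont_plus; apply gcont_mult; try apply gcont_const; try apply gcont_mult; try apply gcont_id; apply Ygc'.
      - intros x Hx. pose proof (HYs x ltac:(lra)).
        replace (1 * (x * Ys x) + - tmin * Ys x) with ((x - tmin) * Ys x) by ring.
        apply Rmult_lt_0_compat; lra. }
    rewrite RInt_lin in H by (apply gcont_ex; first [apply gcont_mult; [apply gcont_id| apply Ygc'] | apply Ygc']).
    fold J in H. change (RInt Ys tmin tmax) with Ns in H. rewrite HJ in H.
    assert (0 < (ms - tmin) * Ns) by lra.
    destruct (Rlt_dec tmin ms) as [|Hn]; auto. exfalso.
    assert (0 <= (tmin - ms) * Ns) by (apply Rmult_le_pos; lra).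
    lra. }
  assert (Hms2 : ms < tmax).
  { assert (0 < RInt (fun t => (-1) * (t * Ys t) + tmax * Ys t) tmin tmax).
    { apply RInt_pos; [lra| |].
      - apply gcont_plus; apply gcont_mult; try apply gcont_const; try apply gcont_mult; try apply gcont_id; apply Ygc'.
      - intros x Hx. pose proof (HYs x ltac:(lra)).
        replace ((-1) * (x * Ys x) + tmax * Ys x) with ((tmax - x) * Ys x) by ring.
        apply Rmult_lt_0_compat; lra. }
    rewrite RInt_lin in H by (apply gcont_ex; first [apply gcont_mult; [apply gcont_id| apply Ygc'] | apply Ygc']).
    fold J in H. change (RInt Ys tmin tmax) with Ns in H. rewrite HJ in H.
    assert (0 < (tmax - ms) * Ns) by lra.
    destruct (Rlt_dec ms tmax) as [|Hn]; auto. exfalso.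
    assert (0 <= (ms - tmax) * Ns) by (apply Rmult_le_pos; lra).
    lra. }
  assert (Hls0 : ls <> 0) by lra.
  destruct (eig_shape tmin tmax alpha Halpha Htmm ls (muf ls) Hls0 (Hmu ls)) as [_ [_ Hinc]].
  fold Ys in Hinc.
  assert (Step4 : ms * I0 ls < I1 ls).
  { assert (H := mean_gt Ys Ys tmin tmax ms ltac:(lra) (Ygc' _ _) (Ygc' _ _) Hinc HYs).
    rewrite (RInt_ext _ (fun x => 1 * (x * (Ys x * Ys x)) + (- ms) * (Ys x * Ys x)
                 + (- Ys ms) * (1 * (x * Ys x) + (- ms) * Ys x))) in H by (intros; reqR; ring).
    rewrite RInt_lin3 in H.
    2:{ apply gcont_mult; [apply gcont_id| apply gcont_mult; apply Ygc']. }
    2:{ apply gcont_mult; apply Ygc'. }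
    2:{ apply gcont_plus; apply gcont_mult; try apply gcont_const; try apply gcont_mult; try apply gcont_id; apply Ygc'. }
    rewrite RInt_lin in H by (apply gcont_ex; first [apply gcont_mult; [apply gcont_id| apply Ygc'] | apply Ygc']).
    fold J in H. change (RInt Ys tmin tmax) with Ns in H. rewrite HJ in H.
    change (RInt (fun x => x * (Ys x * Ys x)) tmin tmax) with (I1 ls) in H.
    change (RInt (fun x => Ys x * Ys x) tmin tmax) with (I0 ls) in H.
    lra. }
  assert (Hgt : cs > 2 * ls * ms).
  { pose proof (HI0 ls) as H0.
    apply Rlt_gt. apply (Rmult_lt_reg_r (I0 ls)); [exact H0|].
    assert (ls * (ms * I0 ls) < ls * I1 ls) by (apply Rmult_lt_compat_l; lra). lra. }
  destruct (part_ii ls Hls) as [m' [Hm1 [Hm2 Hm3]]].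
  assert (Hmm : m' = meanf ls).
  { destruct Hm1 as [pr Hpr]. rewrite <- Hpr, <- RInt_Reals. reflexivity. }
  subst m'. rewrite Hms in Hm2, Hm3 |- *.
  split.
  - apply (sqrt_ineq cs ls ms r); auto; lra.
  - assert (ls * (tmax + tmin) < 2 * ls * ms).
    { replace (2 * ls * ms) with (ls * (2 * ms)) by ring. apply Rmult_lt_compat_l; lra. }
    lra.
Qed.

End Final.

Open Scope R_scope.

Theorem proposition2p1 (tmin tmax alpha r : R)
  (Htmin : 0 < tmin) (Htmm : tmin < tmax) (Halpha : 0 < alpha) (Hr : 0 < r) :
  exists (c : R -> R) (Q : R -> R -> R),
    (* existence *)
    (forall lam, 0 < lam -> spectral_solution alpha r tmin tmax lam (c lam) (Q lam)) /\
    (* uniqueness *)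
    (forall lam c' Q', 0 < lam -> spectral_solution alpha r tmin tmax lam c' Q' ->
        c' = c lam /\ (forall th, tmin <= th <= tmax -> Q' th = Q lam th)) /\
    (* minimum c* = c lam* > 0 attained at lam* > 0, with properties (i)-(iii) *)
    (exists lamstar, 0 < lamstar /\ 0 < c lamstar /\
       (forall lam, 0 < lam -> c lamstar <= c lam) /\
       (* (i) *)
       (forall lam, 0 < lam ->
          (forall x y, tmin < x -> x < y -> y < tmax -> Q lam x < Q lam y) /\
          (exists th0, tmin <= th0 <= tmax /\
             - lam * c lam + lam ^ 2 * th0 + r = 0 /\
             convex_on (Q lam) tmin th0 /\ concave_on (Q lam) th0 tmax)) /\
       (* (ii) *)
       (forall lam, 0 < lam ->
          exists m, mean_is (Q lam) tmin tmax m /\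
            - lam * c lam + lam ^ 2 * m + r = 0 /\ m > (tmax + tmin) / 2) /\
       (* (iii) *)
       (exists mstar, mean_is (Q lamstar) tmin tmax mstar /\
          c lamstar > 2 * sqrt (r * mstar) /\
          c lamstar >= lamstar * (tmax + tmin))).
Proof.
  pose proof (exists_eig tmin tmax alpha Halpha Htmin Htmm) as Hex.
  set (muf := fun lam => proj1_sig (constructive_indefinite_description _ (Hex lam))).
  assert (Hmu : forall lam, Eig tmin tmax alpha lam (muf lam)).
  { intro lam. unfold muf. exact (proj2_sig (constructive_indefinite_description _ (Hex lam))). }
  exists (cf r muf), (Qf tmin tmax alpha muf).
  split; [intros lam Hl; eapply spec_ok; eauto|].
  split; [intros lam c' Q' Hl HS; eapply uniq_ok; eauto|].
  destruct (exists_min tmin tmax alpha r Htmin Htmm Halpha Hr muf Hmu) as [ls [Hls Hmin]].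
  exists ls. split; [exact Hls|]. split.
  { pose proof (c_bounds tmin tmax alpha r Htmm Halpha muf Hmu ls Hls) as [H1 _].
    assert (0 < ls * tmin) by (apply Rmult_lt_0_compat; lra).
    assert (0 < r / ls) by (apply Rdiv_lt_0_compat; lra). lra. }
  split; [exact Hmin|].
  split; [intros lam Hl; eapply part_i; eauto|].
  split; [intros lam Hl; eapply part_ii; eauto|].
  exists (meanf tmin tmax alpha muf ls). split; [eapply meanf_is; eauto|].
  eapply part_iii; eauto.
Qed.
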